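(* For every $\varphi\in L^2(\mathbb{T})$ with $\hat\varphi(0)=0$ and all $s,t$, we have $\langle\varphi,X_{ts}(\varphi,\varphi)\rangle=0$ and $$2\langle\varphi,X^2_{ts}(\varphi,\varphi,\varphi)\rangle+\langle X_{ts}(\varphi,\varphi),X_{ts}(\varphi,\varphi)\rangle=0,$$ where $\langle\cdot,\cdot\rangle$ is the $L^2(\mathbb{T})$ scalar product.
   Context: For a distribution $f$ on $\mathbb{T}=[-\pi,\pi]$ write $f(\xi)=\sum_k\hat f(k)e^{ik\xi}$. $\dot X_\sigma$ is the bilinear operator $\dot X_\sigma(\varphi_1,\varphi_2)=\frac12U(-\sigma)\partial_\xi[(U(\sigma)\varphi_1)(U(\sigma)\varphi_2)]$ with $\widehat{U(t)\varphi}(k)=e^{ik^3t}\hat\varphi(k)$; equivalently $\widehat{\dot X_\sigma(\varphi_1,\varphi_2)}(k)=\frac{ik}{2}\sum_{k_1\ne0,k}e^{-3ikk_1k_2\sigma}\hat\varphi_1(k_1)\hat\varphi_2(k_2)$, $k_2=k-k_1$. $X_{ts}=\int_s^t\dot X_\sigma d\sigma$ (so $\widehat{X_{ts}(\varphi_1,\varphi_2)}(k)=\sum_{k_1\ne0,k}\frac{e^{-3ikk_1k_2s}-e^{-3ikk_1k_2t}}{6k_1k_2}\hat\varphi_1(k_1)\hat\varphi_2(k_2)$) and $X^2_{ts}(\varphi_1,\varphi_2,\varphi_3)=2\int_s^td\sigma\int_s^\sigma d\sigma_1\dot X_\sigma(\varphi_1,\dot X_{\sigma_1}(\varphi_2,\varphi_3))$,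 defined on trigonometric polynomials and extended by continuity (they are bounded on mean-zero $L^2$). *)

(* Defs.v *)
From Stdlib Require Import Reals ZArith Lra.
From Coquelicot Require Import Coquelicot.

Open Scope R_scope.

(** A (mean-zero) element of L^2(T), T = [-pi,pi], is represented by its
    Fourier coefficients  k |-> hat f(k),  with f(xi) = sum_k hat f(k) e^{ik xi}. *)
Definition fcoef := Z -> C.

Definition cis (th : R) : C := (cos th, sin th).

(** Real sum over Z, computed as f 0 + sum_{n>=1} (f n + f (-n)); used only
    for absolutely convergent or finitely supported families. *)
Definition sumZR (f : Z -> R) : R :=
  f 0%Z + Series (fun n : nat => f (Z.of_nat (S n)) + f (- Z.of_nat (S n))%Z).

Definition summableZR (f : Z -> R) : Prop :=
  ex_series (fun n : nat => f (Z.of_nat (S n)) + f (- Z.of_nat (S n))%Z).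

Definition sumZ (f : Z -> C) : C :=
  (sumZR (fun k => fst (f k)), sumZR (fun k => snd (f k))).

Definition in_l2 (f : fcoef) : Prop :=
  summableZR (fun k => (Cmod (f k)) ^ 2).

Definition real_L2_0 (f : fcoef) : Prop :=
  in_l2 f /\ f 0%Z = RtoC 0 /\ (forall k, f (- k)%Z = Cconj (f k)).

(** L^2(T) scalar product: <f,g> = int_T f(xi) conj(g(xi)) dxi
    = 2 pi sum_k hat f(k) conj(hat g(k)) (Parseval). *)
Definition l2inner (f g : fcoef) : C :=
  Cmult (RtoC (2 * PI)) (sumZ (fun k => Cmult (f k) (Cconj (g k)))).

Definition l2norm2 (f : fcoef) : R := sumZR (fun k => (Cmod (f k)) ^ 2).

Definition L2_converges (u : nat -> fcoef) (Y : fcoef) : Prop :=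
  (forall N, in_l2 (fun k => Cminus (u N k) (Y k))) /\
  is_lim_seq (fun N => l2norm2 (fun k => Cminus (u N k) (Y k))) 0.

Definition trunc (N : nat) (f : fcoef) : fcoef :=
  fun k => if (Z.abs k <=? Z.of_nat N)%Z then f k else RtoC 0.

Definition Xdot (sigma : R) (phi1 phi2 : fcoef) : fcoef :=
  fun k =>
    Cmult (Cmult (0, 1) (RtoC (IZR k / 2)))
      (sumZ (fun k1 =>
         if (orb (Z.eqb k1 0) (Z.eqb k1 k)) then RtoC 0 else
         let k2 := (k - k1)%Z in
         Cmult (cis (- 3 * IZR k * IZR k1 * IZR k2 * sigma))
               (Cmult (phi1 k1) (phi2 k2)))).

Definition Xts (t s : R) (phi1 phi2 : fcoef) : fcoef :=
  fun k =>
    sumZ (fun k1 =>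
      if (orb (Z.eqb k1 0) (Z.eqb k1 k)) then RtoC 0 else
      let k2 := (k - k1)%Z in
      Cmult (Cdiv (Cminus (cis (- 3 * IZR k * IZR k1 * IZR k2 * s))
                          (cis (- 3 * IZR k * IZR k1 * IZR k2 * t)))
                  (RtoC (6 * IZR k1 * IZR k2)))
            (Cmult (phi1 k1) (phi2 k2))).

(** X^2_ts(phi1,phi2,phi3) = 2 int_s^t dsigma int_s^sigma dsigma1
      Xdot_sigma(phi1, Xdot_sigma1(phi2,phi3)),
    computed Fourier-coefficientwise; this is the defining formula on
    trigonometric polynomials. *)
Definition X2ts_trig (t s : R) (phi1 phi2 phi3 : fcoef) : fcoef :=
  fun k =>
    Cmult (RtoC 2)
      (RInt (V := C_R_CompleteNormedModule)
        (fun sigma =>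
           RInt (V := C_R_CompleteNormedModule)
             (fun sigma1 => Xdot sigma phi1 (Xdot sigma1 phi2 phi3) k)
             s sigma)
        s t).

(* Main.v *)
Require Import Defs.
From Stdlib Require Import Reals ZArith.
From Coquelicot Require Import Coquelicot.
From Stdlib Require Import Lra Lia ClassicalEpsilon FunctionalExtensionality.
Open Scope R_scope.

Fixpoint zs (lo : Z) (n : nat) (g : Z -> R) : R :=
  match n with O => 0 | S n' => g lo + zs (lo + 1)%Z n' g end.

Lemma zs_ext lo n f g : (forall k, (lo <= k < lo + Z.of_nat n)%Z -> f k = g k) ->
  zs lo n f = zs lo n g.
Proof.
  revert lo; induction n; intros lo H; simpl; auto.
  rewrite H by lia. rewrite (IHn (lo+1)%Z); auto. intros; apply H; lia.
Qed.

Lemma zs_add lo n m g : zs lo (n + m) g = zs lo n g + zs (lo + Z.of_nat n) m g.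
Proof.
  revert lo; induction n; intros lo; simpl.
  - replace (lo + 0)%Z with lo by lia. ring.
  - rewrite IHn. replace (lo + 1 + Z.of_nat n)%Z with (lo + Z.pos (Pos.of_succ_nat n))%Z by lia. ring.
Qed.

Lemma zs_zero lo n g : (forall k, (lo <= k < lo + Z.of_nat n)%Z -> g k = 0) -> zs lo n g = 0.
Proof.
  intros H. rewrite (zs_ext lo n g (fun _ => 0)) by auto. clear H.
  revert lo; induction n; intros; simpl; auto. rewrite IHn; ring.
Qed.

Lemma zs_plus lo n f g : zs lo n (fun k => f k + g k) = zs lo n f + zs lo n g.
Proof. revert lo; induction n; intros; simpl; [ring|rewrite IHn; ring]. Qed.
Lemma zs_scal lo n c f : zs lo n (fun k => c * f k) = c * zs lo n f.
Proof. revert lo; induction n; intros; simpl; [ring|rewrite IHn; ring]. Qed.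
Lemma zs_opp lo n f : zs lo n (fun k => - f k) = - zs lo n f.
Proof. revert lo; induction n; intros; simpl; [ring|rewrite IHn; ring]. Qed.
Lemma zs_minus lo n f g : zs lo n (fun k => f k - g k) = zs lo n f - zs lo n g.
Proof. revert lo; induction n; intros; simpl; [ring|rewrite IHn; ring]. Qed.
Lemma zs_const0 lo n : zs lo n (fun _ => 0) = 0.
Proof. apply zs_zero; auto. Qed.

Lemma zs_le lo n f g : (forall k, (lo <= k < lo + Z.of_nat n)%Z -> f k <= g k) ->
  zs lo n f <= zs lo n g.
Proof.
  revert lo; induction n; intros lo H; simpl; [lra|].
  apply Rplus_le_compat; [apply H; lia|apply IHn; intros; apply H; lia].
Qed.

Lemma zs_nonneg lo n f : (forall k, 0 <= f k) -> 0 <= zs lo n f.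
Proof. intros H. rewrite <- (zs_const0 lo n). apply zs_le; auto. Qed.

Lemma zs_abs lo n f : Rabs (zs lo n f) <= zs lo n (fun k => Rabs (f k)).
Proof.
  revert lo; induction n; intros; simpl. rewrite Rabs_R0; lra.
  eapply Rle_trans; [apply Rabs_triang|]. specialize (IHn (lo+1)%Z); lra.
Qed.

Lemma zs_extend lo n lo' n' g :
  (lo' <= lo)%Z -> (lo + Z.of_nat n <= lo' + Z.of_nat n')%Z ->
  (forall k, (lo' <= k < lo' + Z.of_nat n')%Z -> ~ (lo <= k < lo + Z.of_nat n)%Z -> g k = 0) ->
  zs lo' n' g = zs lo n g.
Proof.
  intros H1 H2 H.
  set (a := Z.to_nat (lo - lo')). set (b := Z.to_nat (lo' + Z.of_nat n' - lo - Z.of_nat n)).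
  assert (E : n' = (a + (n + b))%nat) by (unfold a, b; lia).
  rewrite E, !zs_add.
  rewrite zs_zero, (zs_zero (lo' + Z.of_nat a + Z.of_nat n)%Z b).
  - replace (lo' + Z.of_nat a)%Z with lo by (unfold a; lia). ring.
  - intros k Hk. apply H; unfold a, b in *; lia.
  - intros k Hk. apply H; unfold a, b in *; lia.
Qed.

Lemma zs_shift lo n c g : zs lo n (fun k => g (c + k)%Z) = zs (c + lo) n g.
Proof.
  revert lo; induction n; intros; simpl; auto. rewrite IHn.
  do 2 f_equal; lia.
Qed.

Lemma zs_last lo n g : zs lo (S n) g = zs lo n g + g (lo + Z.of_nat n)%Z.
Proof.
  replace (S n) with (n + 1)%nat by lia. rewrite zs_add. simpl. ring.
Qed.

Lemma zs_refl lo n c g : zs lo n (fun k => g (c - k)%Z) = zs (c - lo - Z.of_nat n + 1) n g.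
Proof.
  revert lo; induction n; intros; [reflexivity|].
  change (zs lo (S n) (fun k => g (c - k)%Z)) with (g (c - lo)%Z + zs (lo+1) n (fun k => g (c - k)%Z)).
  rewrite IHn, zs_last.
  replace (c - (lo + 1) - Z.of_nat n + 1 + Z.of_nat n)%Z with (c - lo)%Z by lia.
  replace (c - (lo+1) - Z.of_nat n + 1)%Z with (c - lo - Z.of_nat (S n) + 1)%Z by lia.
  replace (c - lo - Z.of_nat (S n) + 1 + Z.of_nat n)%Z with (c-lo)%Z by lia. lra.
Qed.

Lemma zs_swap lo1 n1 lo2 n2 (f : Z -> Z -> R) :
  zs lo1 n1 (fun x => zs lo2 n2 (fun y => f x y)) = zs lo2 n2 (fun y => zs lo1 n1 (fun x => f x y)).
Proof.
  revert lo1; induction n1; intros; simpl.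
  - rewrite zs_const0; auto.
  - rewrite IHn1, <- zs_plus. auto.
Qed.

Definition bx (M : nat) (g : Z -> R) : R := zs (- Z.of_nat M) (2 * M + 1) g.

Definition pr (g : Z -> R) (n : nat) : R := g (Z.of_nat (S n)) + g (- Z.of_nat (S n))%Z.

Lemma zs_1 lo g : zs lo 1 g = g lo.
Proof. simpl. ring. Qed.

Lemma bx_S M g : bx (S M) g = bx M g + pr g M.
Proof.
  unfold bx, pr.
  replace (2 * S M + 1)%nat with (1 + ((2 * M + 1) + 1))%nat by lia.
  rewrite !zs_add, !zs_1.
  replace (- Z.of_nat (S M) + Z.of_nat 1)%Z with (- Z.of_nat M)%Z by lia.
  replace (- Z.of_nat M + Z.of_nat (2 * M + 1))%Z with (Z.of_nat (S M)) by lia.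
  lra.
Qed.

Lemma bx_0 g : bx 0 g = g 0%Z.
Proof. unfold bx; simpl. ring. Qed.

Lemma bx_sum_n g M : bx (S M) g = g 0%Z + sum_n (pr g) M.
Proof.
  induction M.
  - rewrite bx_S, bx_0, sum_O. auto.
  - rewrite bx_S, IHM, sum_Sn. unfold plus; simpl. ring.
Qed.

Definition suppR (M : nat) (g : Z -> R) := forall k, (Z.of_nat M < Z.abs k)%Z -> g k = 0.

Lemma bx_supp M M' g : (M <= M')%nat -> suppR M g -> bx M' g = bx M g.
Proof.
  intros HM Hs. unfold bx. apply zs_extend; try lia.
  intros k H1 H2. apply Hs. lia.
Qed.

Lemma is_series_lim (a : nat -> R) (l : R) :
  is_lim_seq (fun n => @sum_n R_AbelianMonoid a n) l <-> is_series a l.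
Proof. split; intros H; exact H. Qed.

Lemma sumZR_fin M g : suppR M g -> summableZR g /\ sumZR g = bx M g.
Proof.
  intros Hs.
  assert (Hl : is_series (pr g) (bx M g - g 0%Z)).
  { apply (proj1 (is_series_lim _ _)). apply is_lim_seq_ext_loc with (u := fun _ => bx M g - g 0%Z).
    - exists M. intros n Hn. change (sum_n (pr g) n) with (@sum_n R_AbelianMonoid (pr g) n).
      assert (bx (S n) g = bx M g) by (apply bx_supp; auto).
      rewrite bx_sum_n in H. lra.
    - apply is_lim_seq_const. }
  split.
  - exists (bx M g - g 0%Z); auto.
  - unfold sumZR. fold (pr g). rewrite (is_series_unique _ _ Hl). ring.
Qed.

Lemma sumZR_pr g : sumZR g = g 0%Z + Series (pr g).
Proof. reflexivity. Qed.
Lemma summable_pr g : summableZR g = ex_series (pr g).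
Proof. reflexivity. Qed.

Lemma bx_tends g : summableZR g -> is_lim_seq (fun M => bx M g) (sumZR g).
Proof.
  intros H. rewrite summable_pr in H. apply Series_correct in H.
  apply is_series_lim in H.
  apply (is_lim_seq_incr_n _ 1). rewrite sumZR_pr.
  apply is_lim_seq_ext with (u := fun n => g 0%Z + sum_n (pr g) n).
  - intros n. replace (n+1)%nat with (S n) by lia. rewrite bx_sum_n. auto.
  - apply (is_lim_seq_plus' _ _ (g 0%Z) (Series (pr g))); auto. apply is_lim_seq_const.
Qed.

Lemma bx_incr g M : (forall k, 0 <= g k) -> bx M g <= bx (S M) g.
Proof. intros H. rewrite bx_S. unfold pr. pose proof (H (Z.of_nat (S M))); pose proof (H (- Z.of_nat (S M))%Z). lra. Qed.

Lemma nonneg_bound g C : (forall k, 0 <= g k) -> (forall M, bx M g <= C) ->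
  summableZR g /\ sumZR g <= C.
Proof.
  intros Hp Hb.
  assert (Hinc : forall n, sum_n (pr g) n <= sum_n (pr g) (S n)).
  { intros n. rewrite sum_Sn. unfold plus; simpl. unfold pr.
    pose proof (Hp (Z.of_nat (S (S n)))); pose proof (Hp (- Z.of_nat (S (S n)))%Z). lra. }
  assert (Hbd : forall n, sum_n (pr g) n <= C - g 0%Z).
  { intros n. pose proof (Hb (S n)). rewrite bx_sum_n in H. lra. }
  destruct (ex_finite_lim_seq_incr _ _ Hinc Hbd) as [l Hl].
  assert (Hs : is_series (pr g) l) by (apply is_series_lim; auto).
  split. exists l; auto.
  rewrite sumZR_pr, (is_series_unique _ _ Hs).
  assert (Rbar_le l (C - g 0%Z)).
  { apply (is_lim_seq_le (sum_n (pr g)) (fun _ => C - g 0%Z) l (C - g 0%Z)); auto. apply is_lim_seq_const. }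
  simpl in H. lra.
Qed.

Lemma bx_le_sum g M : (forall k, 0 <= g k) -> summableZR g -> bx M g <= sumZR g.
Proof.
  intros Hp Hs. apply bx_tends in Hs.
  apply (is_lim_seq_incr_compare (fun M => bx M g)); auto.
  intros; apply bx_incr; auto.
Qed.

Lemma sumZR_nonneg g : (forall k, 0 <= g k) -> summableZR g -> 0 <= sumZR g.
Proof.
  intros Hp Hs. eapply Rle_trans; [|apply (bx_le_sum g 0); auto]. rewrite bx_0. auto.
Qed.

Lemma summable_plus f g : summableZR f -> summableZR g ->
  summableZR (fun k => f k + g k) /\ sumZR (fun k => f k + g k) = sumZR f + sumZR g.
Proof.
  intros Hf Hg. rewrite summable_pr in *.
  assert (E : forall n, pr (fun k => f k + g k) n = pr f n + pr g n) by (intros; unfold pr; ring).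
  split.
  - eapply ex_series_ext. intros n; symmetry; apply E.
    apply (ex_series_plus _ _ Hf Hg).
  - rewrite !sumZR_pr. rewrite (Series_ext _ _ E), Series_plus; auto. ring.
Qed.

Lemma summable_scal c f : summableZR f ->
  summableZR (fun k => c * f k) /\ sumZR (fun k => c * f k) = c * sumZR f.
Proof.
  intros Hf. rewrite summable_pr in *.
  assert (E : forall n, pr (fun k => c * f k) n = c * pr f n) by (intros; unfold pr; ring).
  split.
  - eapply ex_series_ext. intros n; symmetry; apply E.
    apply (ex_series_scal_l c _ Hf).
  - rewrite !sumZR_pr. rewrite (Series_ext _ _ E), Series_scal_l. ring.
Qed.

Lemma summable_minus f g : summableZR f -> summableZR g ->
  summableZR (fun k => f k - g k) /\ sumZR (fun k => f k - g k) = sumZR f - sumZR g.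
Proof.
  intros Hf Hg. destruct (summable_scal (-1) g Hg) as [H1 E1].
  destruct (summable_plus _ _ Hf H1) as [H2 E2].
  replace (fun k => f k - g k) with (fun k => f k + -1 * g k).
  2:{ apply FunctionalExtensionality.functional_extensionality; intros; ring. }
  split; auto. rewrite E2, E1. ring.
Qed.

Lemma summable_le f g : (forall k, Rabs (f k) <= g k) -> summableZR g ->
  summableZR f /\ Rabs (sumZR f) <= sumZR g.
Proof.
  intros H Hg. rewrite summable_pr in *.
  assert (Hn : forall n, Rabs (pr f n) <= pr g n).
  { intros n; unfold pr. eapply Rle_trans; [apply Rabs_triang|].
    pose proof (H (Z.of_nat (S n))); pose proof (H (- Z.of_nat (S n))%Z); lra. }
  assert (Ha : ex_series (fun n => Rabs (pr f n))).
  { apply (@ex_series_le R_AbsRing R_CompleteNormedModule _ (pr g)); auto. intros n. unfold norm; simpl. unfold abs; simpl.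
    rewrite Rabs_Rabsolu. auto. }
  split.
  - apply ex_series_Rabs; auto.
  - rewrite !sumZR_pr. eapply Rle_trans; [apply Rabs_triang|].
    apply Rplus_le_compat; auto.
    eapply Rle_trans; [apply Series_Rabs; auto|].
    apply Series_le; auto. intros n; split; auto. apply Rabs_pos.
Qed.

Lemma tail_bound d g : (forall k, Rabs (d k) <= g k) -> summableZR g ->
  forall M, Rabs (sumZR d - bx M d) <= sumZR g - bx M g.
Proof.
  intros H Hg M.
  destruct (summable_le d g H Hg) as [Hd _].
  assert (Hk : forall j, Rabs (bx (j + M) d - bx M d) <= bx (j + M) g - bx M g).
  { induction j. simpl. rewrite Rminus_diag, Rabs_R0. lra.
    simpl. rewrite !bx_S.
    assert (Rabs (pr d (j + M)) <= pr g (j+M)).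
    { unfold pr. eapply Rle_trans; [apply Rabs_triang|].
      pose proof (H (Z.of_nat (S (j+M)))); pose proof (H (- Z.of_nat (S (j+M)))%Z); lra. }
    replace (bx (j + M) d + pr d (j + M) - bx M d) with ((bx (j + M) d - bx M d) + pr d (j+M)) by ring.
    eapply Rle_trans; [apply Rabs_triang|]. lra. }
  assert (L1 : is_lim_seq (fun j => Rabs (bx (j + M) d - bx M d)) (Rabs (sumZR d - bx M d))).
  { apply (is_lim_seq_abs _ (sumZR d - bx M d)).
    apply (is_lim_seq_minus' _ _ (sumZR d) (bx M d)); [|apply is_lim_seq_const].
    apply (is_lim_seq_incr_n (fun j => bx j d) M). apply bx_tends; auto. }
  assert (L2 : is_lim_seq (fun j => bx (j + M) g - bx M g) (sumZR g - bx M g)).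
  { apply (is_lim_seq_minus' _ _ (sumZR g) (bx M g)); [|apply is_lim_seq_const].
    apply (is_lim_seq_incr_n (fun j => bx j g) M). apply bx_tends; auto. }
  pose proof (is_lim_seq_le _ _ _ _ Hk L1 L2). simpl in H0. auto.
Qed.

Lemma zs_lim lo n (u : nat -> Z -> R) (l : Z -> R) :
  (forall k, is_lim_seq (fun N => u N k) (l k)) ->
  is_lim_seq (fun N => zs lo n (u N)) (zs lo n l).
Proof.
  revert lo; induction n; intros lo H; simpl.
  - apply is_lim_seq_const.
  - apply (is_lim_seq_plus' _ _ (l lo) (zs (lo+1) n l)); auto.
Qed.

Lemma DCT (u : nat -> Z -> R) (f g : Z -> R) :
  (forall k, is_lim_seq (fun N => u N k) (f k)) ->
  (forall N k, Rabs (u N k) <= g k) -> summableZR g ->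
  is_lim_seq (fun N => sumZR (u N)) (sumZR f).
Proof.
  intros Hl Hb Hg.
  assert (Hf : forall k, Rabs (f k) <= g k).
  { intros k. assert (Rbar_le (Rabs (f k)) (g k)).
    { apply (is_lim_seq_le (fun N => Rabs (u N k)) (fun _ => g k)); auto.
      apply (is_lim_seq_abs _ (f k)); auto. apply is_lim_seq_const. }
    simpl in H; auto. }
  assert (Hfs : summableZR f) by (apply (summable_le f g); auto).
  assert (Hus : forall N, summableZR (u N)) by (intros; apply (summable_le _ g); auto).
  destruct (summable_scal 2 g Hg) as [H2g E2g].
  assert (Hd : forall N k, Rabs (u N k - f k) <= 2 * g k).
  { intros. eapply Rle_trans; [apply Rabs_triang|]. rewrite Rabs_Ropp.
    pose proof (Hb N k); pose proof (Hf k); lra. }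
  apply is_lim_seq_spec. intros eps.
  assert (Ht := bx_tends _ H2g). apply is_lim_seq_spec in Ht.
  assert (he : 0 < eps / 2) by (destruct eps; simpl; lra).
  destruct (Ht (mkposreal _ he)) as [M HM]. specialize (HM M (le_n M)). simpl in HM.
  assert (Hz : is_lim_seq (fun N => bx M (fun k => u N k - f k)) 0).
  { unfold bx. replace 0 with (zs (- Z.of_nat M) (2 * M + 1) (fun _ => 0)) by apply zs_const0.
    apply zs_lim. intros k. replace 0 with (f k - f k) by ring.
    apply (is_lim_seq_minus' _ _ (f k) (f k)); auto. apply is_lim_seq_const. }
  apply is_lim_seq_spec in Hz. destruct (Hz (mkposreal _ he)) as [N0 HN0].
  exists N0. intros N HN. specialize (HN0 N HN). simpl in HN0. rewrite Rminus_0_r in HN0.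
  destruct (summable_minus (u N) f (Hus N) Hfs) as [Hds Eds].
  rewrite <- Eds.
  pose proof (tail_bound (fun k => u N k - f k) (fun k => 2 * g k) (Hd N) H2g M).
  rewrite Rabs_minus_sym in HM. rewrite Rabs_right in HM.
  2:{ pose proof (bx_le_sum (fun k => 2 * g k) M). apply Rle_ge. apply Rge_le in H0 || idtac.
      assert (forall k, 0 <= 2 * g k) by (intros k; pose proof (Hb 0%nat k); pose proof (Rabs_pos (u 0%nat k)); lra).
      specialize (H0 H1 H2g). lra. }
  replace (sumZR (fun k => u N k - f k)) with ((sumZR (fun k => u N k - f k) - bx M (fun k => u N k - f k)) + bx M (fun k => u N k - f k)) by ring.
  eapply Rle_lt_trans; [apply Rabs_triang|]. lra.
Qed.

Ltac Ctac := apply injective_projections; simpl; try ring.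

Definition zsC lo n (h : Z -> C) : C :=
  (zs lo n (fun k => fst (h k)), zs lo n (fun k => snd (h k))).
Definition bxC (M : nat) (h : Z -> C) : C := zsC (- Z.of_nat M) (2 * M + 1) h.
Definition suppC (M : nat) (h : Z -> C) := forall k, (Z.of_nat M < Z.abs k)%Z -> h k = RtoC 0.

Lemma sumZ_fin M h : suppC M h -> sumZ h = bxC M h.
Proof.
  intros H. unfold sumZ, bxC, zsC.
  assert (H1 : suppR M (fun k => fst (h k))) by (intros k Hk; rewrite H; auto).
  assert (H2 : suppR M (fun k => snd (h k))) by (intros k Hk; rewrite H; auto).
  rewrite (proj2 (sumZR_fin M _ H1)), (proj2 (sumZR_fin M _ H2)). auto.
Qed.

Lemma sumZ_summable M h : suppC M h -> summableZR (fun k => fst (h k)) /\ summableZR (fun k => snd (h k)).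
Proof.
  intros H; split; apply (sumZR_fin M); intros k Hk; rewrite H; auto.
Qed.

Lemma bxC_supp M M' h : (M <= M')%nat -> suppC M h -> bxC M' h = bxC M h.
Proof.
  intros HM H. unfold bxC, zsC. f_equal; apply (bx_supp M M'); auto; intros k Hk; rewrite H; auto.
Qed.

Lemma zsC_ext lo n f g : (forall k, (lo <= k < lo + Z.of_nat n)%Z -> f k = g k) ->
  zsC lo n f = zsC lo n g.
Proof. intros H. unfold zsC. f_equal; apply zs_ext; intros; rewrite H; auto. Qed.

Lemma zsC_plus lo n f g : zsC lo n (fun k => Cplus (f k) (g k)) = Cplus (zsC lo n f) (zsC lo n g).
Proof. unfold zsC. simpl. rewrite !zs_plus. auto. Qed.

Lemma zsC_minus lo n f g : zsC lo n (fun k => Cminus (f k) (g k)) = Cminus (zsC lo n f) (zsC lo n g).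
Proof. unfold zsC. simpl. Ctac. rewrite zs_plus, zs_opp. auto. rewrite zs_plus, zs_opp. auto. Qed.

Lemma zsC_mult_l lo n c f : zsC lo n (fun k => Cmult c (f k)) = Cmult c (zsC lo n f).
Proof. unfold zsC. Ctac; rewrite zs_minus || rewrite zs_plus; rewrite !zs_scal; auto. Qed.

Lemma zsC_mult_r lo n c f : zsC lo n (fun k => Cmult (f k) c) = Cmult (zsC lo n f) c.
Proof.
  rewrite <- (Cmult_comm c). rewrite <- zsC_mult_l. apply zsC_ext. intros; apply Cmult_comm.
Qed.

Lemma zsC_conj lo n f : zsC lo n (fun k => Cconj (f k)) = Cconj (zsC lo n f).
Proof. unfold zsC. Ctac. apply zs_opp. Qed.

Lemma zsC_swap lo1 n1 lo2 n2 (f : Z -> Z -> C) :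
  zsC lo1 n1 (fun x => zsC lo2 n2 (fun y => f x y)) = zsC lo2 n2 (fun y => zsC lo1 n1 (fun x => f x y)).
Proof. unfold zsC; simpl. f_equal; apply zs_swap. Qed.

Lemma zsC_refl lo n c g : zsC lo n (fun k => g (c - k)%Z) = zsC (c - lo - Z.of_nat n + 1) n g.
Proof. unfold zsC; f_equal; apply (zs_refl lo n c (fun k => _ (g k))). Qed.

Lemma zsC_shift lo n c g : zsC lo n (fun k => g (c + k)%Z) = zsC (c + lo) n g.
Proof. unfold zsC; f_equal; apply (zs_shift lo n c (fun k => _ (g k))). Qed.

Lemma zsC_extend lo n lo' n' g :
  (lo' <= lo)%Z -> (lo + Z.of_nat n <= lo' + Z.of_nat n')%Z ->
  (forall k, (lo' <= k < lo' + Z.of_nat n')%Z -> ~ (lo <= k < lo + Z.of_nat n)%Z -> g k = RtoC 0) ->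
  zsC lo' n' g = zsC lo n g.
Proof.
  intros H1 H2 H. unfold zsC; f_equal; apply zs_extend; auto; intros; rewrite H; auto.
Qed.

Lemma zsC_zero lo n g : (forall k, (lo <= k < lo + Z.of_nat n)%Z -> g k = RtoC 0) -> zsC lo n g = RtoC 0.
Proof. intros H. unfold zsC, RtoC. f_equal; apply zs_zero; intros; rewrite H; auto. Qed.

Lemma bxC_refl0 M g : bxC M (fun k => g (- k)%Z) = bxC M g.
Proof.
  unfold bxC. rewrite (zsC_ext _ _ _ (fun k => g (0 - k)%Z)) by (intros; f_equal; lia).
  rewrite zsC_refl. f_equal. lia.
Qed.

Lemma bxC_subbox M M' g : (M <= M')%nat ->
  (forall k, (Z.of_nat M < Z.abs k)%Z -> g k = RtoC 0) -> bxC M' g = bxC M g.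
Proof. intros; apply bxC_supp; auto. Qed.

Lemma Cdiv_R z r : Cdiv z (RtoC r) = (fst z * / r, snd z * / r).
Proof.
  destruct (Req_dec r 0) as [->|Hr].
  - unfold Cdiv, Cinv, Cmult; simpl. replace (0 ^ 2 + 0 ^ 2) with 0 by ring.
    unfold Rdiv. rewrite Rinv_0. Ctac.
  - unfold Cdiv, Cinv, Cmult; simpl. Ctac; field; auto.
Qed.

Lemma cis_conj a : Cconj (cis a) = cis (- a).
Proof. unfold cis, Cconj; simpl. rewrite cos_neg, sin_neg. auto. Qed.

Lemma cis_0 : cis 0 = RtoC 1.
Proof. unfold cis. rewrite cos_0, sin_0. auto. Qed.

Lemma Cmod_cis a : Cmod (cis a) = 1.
Proof.
  unfold Cmod, cis. cbn [fst snd]. replace (cos a ^ 2 + sin a ^ 2) with 1. apply sqrt_1.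
  pose proof (sin2_cos2 a). unfold Rsqr in H. rewrite <- H. ring.
Qed.

Lemma Cmod_le_sum z : Cmod z <= Rabs (fst z) + Rabs (snd z).
Proof.
  unfold Cmod. apply sqrt_le_1_alt' || idtac.
  rewrite <- (sqrt_Rsqr (Rabs (fst z) + Rabs (snd z))).
  2:{ pose proof (Rabs_pos (fst z)); pose proof (Rabs_pos (snd z)); lra. }
  apply sqrt_le_1_alt. unfold Rsqr.
  pose proof (Rabs_pos (fst z)); pose proof (Rabs_pos (snd z)).
  replace (fst z ^ 2) with (Rabs (fst z) * Rabs (fst z)) by (rewrite <- Rabs_mult; rewrite Rabs_right; [ring| nra]).
  replace (snd z ^ 2) with (Rabs (snd z) * Rabs (snd z)) by (rewrite <- Rabs_mult; rewrite Rabs_right; [ring| nra]).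
  nra.
Qed.

Lemma fst_le_Cmod z : Rabs (fst z) <= Cmod z.
Proof. apply re_le_Cmod. Qed.
Lemma snd_le_Cmod z : Rabs (snd z) <= Cmod z.
Proof. pose proof (Rmax_Cmod z). pose proof (Rmax_r (Rabs (fst z)) (Rabs (snd z))). lra. Qed.

Lemma sym3 (N : nat) (F : Z -> Z -> Z -> C) :
  (forall x y z, F x y z = F y x z) ->
  (forall x y z, F x y z = F x z y) ->
  (forall x y z, (Z.of_nat N < Z.abs x)%Z \/ (Z.of_nat N < Z.abs y)%Z \/ (Z.of_nat N < Z.abs z)%Z -> F x y z = RtoC 0) ->
  (forall x y z, x = 0%Z \/ y = 0%Z \/ z = 0%Z -> F x y z = RtoC 0) ->
  bxC N (fun x => bxC N (fun y => Cmult (F x y (- x - y)%Z) (RtoC (/ (IZR y * IZR (- x - y)))))) = RtoC 0.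
Proof.
  intros S1 S2 Hs H0.
  set (A := bxC N (fun x => bxC N (fun y => Cmult (F x y (- x - y)%Z) (RtoC (/ (IZR y * IZR (- x - y))))))).
  set (B := bxC N (fun x => bxC N (fun y => Cmult (F x y (- x - y)%Z) (RtoC (/ (IZR x * IZR (- x - y))))))).
  set (D := bxC N (fun x => bxC N (fun y => Cmult (F x y (- x - y)%Z) (RtoC (/ (IZR x * IZR y)))))).
  assert (AB : A = B).
  { unfold A, B, bxC. rewrite zsC_swap. apply zsC_ext; intros x Hx. apply zsC_ext; intros y Hy.
    rewrite S1. replace (- y - x)%Z with (- x - y)%Z by lia. auto. }
  assert (BD : B = D).
  { unfold B, D, bxC. apply zsC_ext; intros x Hx.
    set (h := fun y => Cmult (F x y (- x - y)%Z) (RtoC (/ (IZR x * IZR (- x - y))))).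
    transitivity (zsC (- 2 * Z.of_nat N) (4 * N + 1) h).
    { symmetry. apply zsC_extend; try lia. intros k Hk1 Hk2. unfold h. rewrite Hs. Ctac. lia. }
    transitivity (zsC (- Z.of_nat N) (2 * N + 1) (fun y => h (- x - y)%Z)).
    { rewrite zsC_refl. apply zsC_extend; try lia. intros k Hk1 Hk2. unfold h. rewrite Hs. Ctac. lia. }
    apply zsC_ext. intros y Hy. unfold h; cbv beta. replace (- x - (- x - y))%Z with y by lia. rewrite S2. auto. }
  assert (Hsum : Cplus (Cplus A B) D = RtoC 0).
  { unfold A, B, D, bxC. rewrite <- !zsC_plus. apply zsC_zero; intros x Hx.
    rewrite <- !zsC_plus. apply zsC_zero; intros y Hy.
    destruct (Z.eq_dec x 0) as [E|E]; [rewrite (H0 x y); [Ctac|auto]|].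
    destruct (Z.eq_dec y 0) as [E'|E']; [rewrite (H0 x y); [Ctac|auto]|].
    destruct (Z.eq_dec (-x-y) 0) as [E''|E'']; [rewrite (H0 x y); [Ctac|auto]|].
    apply not_0_IZR in E, E', E''.
    assert (E3 : / (IZR y * IZR (- x - y)) + / (IZR x * IZR (- x - y)) + / (IZR x * IZR y) = 0).
    { rewrite !minus_IZR, !opp_IZR in *. field. auto.
    }
    transitivity (Cmult (F x y (- x - y)%Z) (RtoC (/ (IZR y * IZR (- x - y)) + / (IZR x * IZR (- x - y)) + / (IZR x * IZR y)))).
    { Ctac. }
    rewrite E3. Ctac. }
  rewrite <- BD, <- AB in Hsum. fold A. clearbody A.
  assert (Hf : fst A = 0 /\ snd A = 0).
  { split; [apply (f_equal fst) in Hsum | apply (f_equal snd) in Hsum]; simpl in Hsum; lra. }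
  apply injective_projections; simpl; tauto.
Qed.

Definition realf (p : fcoef) := forall k, p (- k)%Z = Cconj (p k).

Definition termX (t s : R) (p1 p2 : fcoef) (k k1 : Z) : C :=
  if orb (Z.eqb k1 0) (Z.eqb k1 k) then RtoC 0 else
  Cmult (Cdiv (Cminus (cis (- 3 * IZR k * IZR k1 * IZR (k - k1) * s))
                      (cis (- 3 * IZR k * IZR k1 * IZR (k - k1) * t)))
              (RtoC (6 * IZR k1 * IZR (k - k1))))
        (Cmult (p1 k1) (p2 (k - k1)%Z)).

Lemma Xts_eq t s p1 p2 k : Xts t s p1 p2 k = sumZ (termX t s p1 p2 k).
Proof. reflexivity. Qed.

Lemma Cdiv_R' w r : Cdiv w (RtoC r) = Cmult w (RtoC (/ r)).
Proof. rewrite Cdiv_R. Ctac. Qed.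

Lemma RtoC_mult' a b : RtoC (a * b) = Cmult (RtoC a) (RtoC b).
Proof. Ctac. Qed.

Lemma Cconj_involutive' z : Cconj (Cconj z) = z.
Proof. Ctac. Qed.

Lemma realf_conj p k : realf p -> Cconj (p k) = p (- k)%Z.
Proof. intros H. rewrite H. auto. Qed.

Lemma termX_supp N t s p1 p2 k k1 : suppC N p1 -> (Z.of_nat N < Z.abs k1)%Z -> termX t s p1 p2 k k1 = RtoC 0.
Proof.
  intros H Hk. unfold termX. destruct (_ || _)%bool; auto. rewrite (H k1 Hk). Ctac.
Qed.

Lemma Xts_fin N t s p1 p2 k : suppC N p1 -> Xts t s p1 p2 k = bxC N (termX t s p1 p2 k).
Proof.
  intros H. rewrite Xts_eq. apply sumZ_fin. intros k1 Hk; apply (termX_supp N); auto.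
Qed.

Lemma bxC_ext M f g : (forall k, (Z.abs k <= Z.of_nat M)%Z -> f k = g k) -> bxC M f = bxC M g.
Proof. intros H. unfold bxC. apply zsC_ext. intros; apply H; lia. Qed.

Lemma bxC_conj M f : bxC M (fun k => Cconj (f k)) = Cconj (bxC M f).
Proof. apply zsC_conj. Qed.
Lemma bxC_mult_l M c f : bxC M (fun k => Cmult c (f k)) = Cmult c (bxC M f).
Proof. apply zsC_mult_l. Qed.
Lemma bxC_mult_r M c f : bxC M (fun k => Cmult (f k) c) = Cmult (bxC M f) c.
Proof. apply zsC_mult_r. Qed.
Lemma bxC_plus M f g : bxC M (fun k => Cplus (f k) (g k)) = Cplus (bxC M f) (bxC M g).
Proof. apply zsC_plus. Qed.
Lemma bxC_swap M M' (f : Z -> Z -> C) :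
  bxC M (fun x => bxC M' (fun y => f x y)) = bxC M' (fun y => bxC M (fun x => f x y)).
Proof. apply zsC_swap. Qed.

Lemma Cmult_0_l' z : Cmult (RtoC 0) z = RtoC 0.
Proof. Ctac. Qed.
Lemma Cmult_0_r' z : Cmult z (RtoC 0) = RtoC 0.
Proof. Ctac. Qed.
Lemma Cconj_0' : Cconj (RtoC 0) = RtoC 0.
Proof. Ctac. Qed.

Lemma part1_fin N psi t s : suppC N psi -> psi 0%Z = RtoC 0 -> realf psi ->
  l2inner psi (Xts t s psi psi) = RtoC 0.
Proof.
  intros Hs H0 Hr. unfold l2inner.
  rewrite (sumZ_fin N).
  2:{ intros k Hk. rewrite (Hs k Hk). apply Cmult_0_l'. }
  set (F := fun x y z => Cmult (Cmult (Cmult (Cmult (psi x) (psi y)) (psi z))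
        (Cminus (cis (3 * IZR x * IZR y * IZR z * s)) (cis (3 * IZR x * IZR y * IZR z * t)))) (RtoC (/ 6))).
  rewrite (bxC_ext _ _ (fun x => bxC N (fun y => Cmult (F x y (- x - y)%Z) (RtoC (/ (IZR y * IZR (- x - y))))))).
  - rewrite sym3. apply Cmult_0_r'.
    + intros. unfold F. replace (3 * IZR y * IZR x * IZR z) with (3 * IZR x * IZR y * IZR z) by ring.
      replace (Cmult (psi y) (psi x)) with (Cmult (psi x) (psi y)) by ring. auto.
    + intros. unfold F. replace (3 * IZR x * IZR z * IZR y) with (3 * IZR x * IZR y * IZR z) by ring.
      replace (Cmult (Cmult (psi x) (psi z)) (psi y)) with (Cmult (Cmult (psi x) (psi y)) (psi z)) by ring. auto.
    + intros a b c [H|[H|H]]; unfold F; rewrite (Hs _ H); ring.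
    + intros a b c [H|[H|H]]; subst; unfold F; rewrite H0; ring.
  - intros x Hx. rewrite (Xts_fin N) by auto. rewrite <- bxC_conj, <- bxC_mult_l.
    rewrite <- (bxC_refl0 N (fun k1 => Cmult (psi x) (Cconj (termX t s psi psi x k1)))).
    unfold bxC. apply zsC_ext. intros y Hy. cbv beta.
    unfold termX.
    destruct (Z.eqb_spec (- y) 0) as [E|E]; simpl.
    { assert (y = 0%Z) by lia. subst y. unfold F. rewrite H0, Cconj_0'. ring. }
    destruct (Z.eqb_spec (- y) x) as [E'|E']; simpl.
    { replace (- x - y)%Z with 0%Z by lia. unfold F. rewrite H0, Cconj_0'. ring. }
    rewrite !Cmult_conj, Cdiv_R', Cmult_conj, (realf_conj psi _ Hr), (realf_conj psi _ Hr).
    replace (- - y)%Z with y by lia. replace (- (x - - y))%Z with (- x - y)%Z by lia.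
    assert (Cconj (Cminus (cis (-3 * IZR x * IZR (- y) * IZR (x - - y) * s)) (cis (-3 * IZR x * IZR (- y) * IZR (x - - y) * t)))
      = Cminus (cis (3 * IZR x * IZR y * IZR (- x - y) * s)) (cis (3 * IZR x * IZR y * IZR (- x - y) * t))) as ->.
    { unfold Cminus. rewrite Cplus_conj, Copp_conj, !cis_conj. 
      rewrite !opp_IZR, !minus_IZR, !opp_IZR. f_equal; [|f_equal]; f_equal; ring. }
    assert (Cconj (RtoC (/ (6 * IZR (- y) * IZR (x - - y)))) = RtoC (/ 6) * RtoC (/ (IZR y * IZR (- x - y))))%C as ->.
    { rewrite !minus_IZR, !opp_IZR. unfold Cconj; simpl. Ctac.
      destruct (Req_dec (IZR y) 0) as [Ey|Ey]. { rewrite Ey. replace (6 * - 0 * (IZR x - - 0)) with 0 by ring. replace (0 * (- IZR x - 0)) with 0 by ring. rewrite Rinv_0. ring. }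
      destruct (Req_dec (- IZR x - IZR y) 0) as [Ez|Ez].
      { rewrite Ez. replace (IZR x - - IZR y) with 0 by lra. replace (6 * - IZR y * 0) with 0 by ring. replace (IZR y * 0) with 0 by ring. rewrite Rinv_0. ring. }
      field. split; auto. lra. }
    unfold F. ring.
Qed.

Definition termD (sg : R) (p1 p2 : fcoef) (k k1 : Z) : C :=
  if orb (Z.eqb k1 0) (Z.eqb k1 k) then RtoC 0 else
  Cmult (cis (- 3 * IZR k * IZR k1 * IZR (k - k1) * sg)) (Cmult (p1 k1) (p2 (k - k1)%Z)).

Definition iC (k : Z) : C := Cmult (0, 1) (RtoC (IZR k / 2)).

Lemma Xdot_eq sg p1 p2 k : Xdot sg p1 p2 k = Cmult (iC k) (sumZ (termD sg p1 p2 k)).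
Proof. reflexivity. Qed.

Lemma termD_supp N sg p1 p2 k k1 : suppC N p1 -> (Z.of_nat N < Z.abs k1)%Z -> termD sg p1 p2 k k1 = RtoC 0.
Proof.
  intros H Hk. unfold termD. destruct (_ || _)%bool; auto. rewrite (H k1 Hk). ring.
Qed.

Lemma Xdot_fin N sg p1 p2 k : suppC N p1 -> Xdot sg p1 p2 k = Cmult (iC k) (bxC N (termD sg p1 p2 k)).
Proof.
  intros H. rewrite Xdot_eq. f_equal. apply sumZ_fin. intros k1 Hk; apply (termD_supp N); auto.
Qed.

Lemma bxC_refl2 N (f : Z -> Z -> C) :
  bxC N (fun x => bxC N (fun y => f x y)) = bxC N (fun x => bxC N (fun y => f (- x)%Z (- y)%Z)).
Proof.
  rewrite <- (bxC_refl0 N (fun x => bxC N (fun y => f x y))). apply bxC_ext. intros x _.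
  rewrite <- (bxC_refl0 N (fun y => f (- x)%Z y)). auto.
Qed.

Section Alg2.
Variables (N : nat) (psi Zf : fcoef) (sg : R).
Hypotheses (Hs : suppC N psi) (H0 : psi 0%Z = RtoC 0) (Hr : realf psi)
  (Hz0 : Zf 0%Z = RtoC 0) (Hzr : realf Zf).

Let W x y := Cmult (Cmult (Cmult (psi x) (psi y)) (Zf (- x - y)%Z)) (cis (3 * IZR x * IZR y * IZR (- x - y) * sg)).

Lemma W_sym x y : W x y = W y x.
Proof.
  unfold W. replace (- y - x)%Z with (- x - y)%Z by lia.
  replace (3 * IZR y * IZR x) with (3 * IZR x * IZR y) by ring. ring.
Qed.

Definition PP := bxC N (fun k => Cmult (psi k) (Cconj (Xdot sg psi Zf k))).
Definition QQ := bxC (2 * N) (fun k => Cmult (Xdot sg psi psi k) (Cconj (Zf k))).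

Lemma PP_form : PP = bxC N (fun x => bxC N (fun y => Cmult (W x y) (Cconj (iC x)))).
Proof.
  unfold PP. apply bxC_ext. intros x Hx.
  rewrite (Xdot_fin N) by auto. rewrite Cmult_conj, <- bxC_conj, <- bxC_mult_l, <- bxC_mult_l.
  rewrite <- (bxC_refl0 N). apply bxC_ext. intros y Hy. unfold termD.
  destruct (Z.eqb_spec (- y) 0) as [E|E]; simpl.
  { assert (y = 0%Z) by lia. subst y. unfold W. rewrite H0. rewrite Cconj_0'. ring. }
  destruct (Z.eqb_spec (- y) x) as [E'|E']; simpl.
  { unfold W. replace (- x - y)%Z with 0%Z by lia. rewrite Hz0, Cconj_0'. ring. }
  rewrite !Cmult_conj, cis_conj, (realf_conj psi _ Hr), (realf_conj Zf _ Hzr).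
  replace (- - y)%Z with y by lia. replace (- (x - - y))%Z with (- x - y)%Z by lia.
  unfold W. rewrite !opp_IZR, !minus_IZR, !opp_IZR.
  replace (- (-3 * IZR x * - IZR y * (IZR x - - IZR y) * sg)) with (3 * IZR x * IZR y * (- IZR x - IZR y) * sg) by ring.
  ring.
Qed.

Lemma Xdot_supp sg' p k : suppC N p -> (Z.of_nat (2 * N) < Z.abs k)%Z -> Xdot sg' p p k = RtoC 0.
Proof.
  intros Hp Hk. rewrite (Xdot_fin N) by auto.
  rewrite (bxC_ext _ _ (fun _ => RtoC 0)).
  - unfold bxC. rewrite zsC_zero; auto. ring.
  - intros k1 Hk1. unfold termD. destruct (_ || _)%bool; auto. rewrite (Hp (k - k1)%Z) by lia. ring.
Qed.

Lemma QQ_form : QQ = bxC N (fun x => bxC N (fun y => Cmult (W x y) (iC (x + y)))).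
Proof.
  unfold QQ.
  rewrite (bxC_ext _ _ (fun k => bxC N (fun k1 => Cmult (Cmult (iC k) (termD sg psi psi k k1)) (Zf (- k)%Z)))).
  2:{ intros k Hk. rewrite (Xdot_fin N) by auto. rewrite <- bxC_mult_l, <- bxC_mult_r.
      rewrite (realf_conj Zf _ Hzr). auto. }
  rewrite bxC_swap. apply bxC_ext. intros x Hx.
  set (q := fun k => Cmult (Cmult (iC k) (termD sg psi psi k x)) (Zf (- k)%Z)).
  transitivity (zsC (x - Z.of_nat N) (2 * N + 1) q).
  { unfold bxC. apply zsC_extend; try lia. intros k Hk1 Hk2. unfold q, termD.
    destruct (_ || _)%bool. ring. rewrite (Hs (k - x)%Z) by lia. ring. }
  unfold bxC. replace (x - Z.of_nat N)%Z with (x + - Z.of_nat N)%Z by lia.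
  rewrite <- zsC_shift. apply zsC_ext. intros y Hy. unfold q, termD.
  replace (x + y - x)%Z with y by lia.
  destruct (Z.eqb_spec x 0) as [E|E]; simpl.
  { subst x. unfold W. rewrite H0. ring. }
  destruct (Z.eqb_spec x (x + y)) as [E'|E']; simpl.
  { replace y with 0%Z by lia. unfold W. rewrite H0. ring. }
  unfold W. replace (- (x + y))%Z with (- x - y)%Z by lia.
  rewrite !plus_IZR, !minus_IZR, !opp_IZR.
  replace (-3 * (IZR x + IZR y) * IZR x * IZR y * sg) with (3 * IZR x * IZR y * (- IZR x - IZR y) * sg) by ring.
  ring.
Qed.

Lemma alg2 : Cplus (Cmult (RtoC 2) PP) QQ = RtoC 0.
Proof.
  assert (PP2 : PP = bxC N (fun x => bxC N (fun y => Cmult (W x y) (Cconj (iC y))))).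
  { rewrite PP_form, bxC_swap. apply bxC_ext; intros; apply bxC_ext; intros. rewrite W_sym. auto. }
  replace (Cmult (RtoC 2) PP) with (Cplus PP PP) by ring.
  rewrite PP_form at 1. rewrite PP2, QQ_form, <- !bxC_plus.
  unfold bxC. apply zsC_zero. intros x _. rewrite <- !zsC_plus. apply zsC_zero. intros y _.
  unfold iC. rewrite plus_IZR. Ctac; field.
Qed.

Lemma PP_real : Cconj PP = PP.
Proof.
  rewrite PP_form at 1.
  transitivity (bxC N (fun x => bxC N (fun y => Cconj (Cmult (W x y) (Cconj (iC x)))))).
  { rewrite <- bxC_conj. apply bxC_ext; intros. rewrite <- bxC_conj. auto. }
  rewrite bxC_refl2. rewrite PP_form. apply bxC_ext; intros x _; apply bxC_ext; intros y _.
  unfold W. rewrite !Cmult_conj, cis_conj, Cconj_involutive', !(realf_conj _ _ Hr), (realf_conj _ _ Hzr).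
  replace (- - x)%Z with x by lia. replace (- - y)%Z with y by lia.
  replace (- (x - - y))%Z with (- x - y)%Z by lia.
  unfold iC. rewrite !opp_IZR, !minus_IZR, !opp_IZR.
  replace (- (3 * - IZR x * - IZR y * (IZR x - - IZR y) * sg)) with (3 * IZR x * IZR y * (- IZR x - IZR y) * sg) by ring.
  Ctac; unfold Rdiv; ring.
Qed.
End Alg2.

Lemma D_plus (f g : R -> R) (x df dg : R) : is_derive f x df -> is_derive g x dg -> is_derive (fun y => f y + g y) x (df + dg).
Proof. intros; apply (is_derive_plus f g x df dg); auto. Qed.
Lemma D_minus (f g : R -> R) (x df dg : R) : is_derive f x df -> is_derive g x dg -> is_derive (fun y => f y - g y) x (df - dg).
Proof. intros; apply (is_derive_minus f g x df dg); auto. Qed.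
Lemma D_mult (f g : R -> R) (x df dg : R) : is_derive f x df -> is_derive g x dg -> is_derive (fun y => f y * g y) x (df * g x + f x * dg).
Proof. intros; apply (is_derive_mult f g x df dg); auto. intros; apply Rmult_comm. Qed.
Lemma D_const (a x : R) : is_derive (fun _ => a) x 0.
Proof. apply (is_derive_const a x). Qed.
Lemma D_opp (f : R -> R) (x df : R) : is_derive f x df -> is_derive (fun y => - f y) x (- df).
Proof. intros; apply (is_derive_opp f x df); auto. Qed.
Lemma D_ext (f g : R -> R) (x l l' : R) : (forall y, f y = g y) -> l = l' -> is_derive f x l -> is_derive g x l'.
Proof. intros H -> H'. apply (is_derive_ext f g); auto. Qed.
Lemma D_cos (a x : R) : is_derive (fun y => cos (a * y)) x (- a * sin (a * x)).
Proof. auto_derive; auto. ring. Qed.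
Lemma D_sin (a x : R) : is_derive (fun y => sin (a * y)) x (a * cos (a * x)).
Proof. auto_derive; auto. ring. Qed.

Definition CD (f : R -> C) (x : R) (l : C) :=
  is_derive (fun y => fst (f y)) x (fst l) /\ is_derive (fun y => snd (f y)) x (snd l).

Lemma CD_ext f g x l l' : (forall y, f y = g y) -> l = l' -> CD f x l -> CD g x l'.
Proof.
  intros H -> [H1 H2]. split; [apply (D_ext (fun y => fst (f y))) with (fst l')|apply (D_ext (fun y => snd (f y))) with (snd l')]; auto;
  intros; rewrite H; auto.
Qed.

Lemma CD_const c x : CD (fun _ => c) x (RtoC 0).
Proof. split; apply D_const. Qed.

Lemma CD_plus f g x lf lg : CD f x lf -> CD g x lg -> CD (fun y => Cplus (f y) (g y)) x (Cplus lf lg).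
Proof. intros [A B] [C D]. split; simpl; apply D_plus; auto. Qed.

Lemma CD_minus f g x lf lg : CD f x lf -> CD g x lg -> CD (fun y => Cminus (f y) (g y)) x (Cminus lf lg).
Proof.
  intros [A B] [C D]. split; simpl.
  - apply (D_ext (fun y => fst (f y) - fst (g y))) with (fst lf - fst lg); [intros; simpl; ring| simpl; ring|]. apply D_minus; auto.
  - apply (D_ext (fun y => snd (f y) - snd (g y))) with (snd lf - snd lg); [intros; simpl; ring| simpl; ring|]. apply D_minus; auto.
Qed.

Lemma CD_mult f g x lf lg : CD f x lf -> CD g x lg ->
  CD (fun y => Cmult (f y) (g y)) x (Cplus (Cmult lf (g x)) (Cmult (f x) lg)).
Proof.
  intros [A B] [C D]. split; simpl.
  - eapply D_ext; [intros; reflexivity| |apply D_minus; apply D_mult; eauto]. simpl; ring.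
  - eapply D_ext; [intros; reflexivity| |apply D_plus; apply D_mult; eauto]. simpl; ring.
Qed.

Lemma CD_conj f x l : CD f x l -> CD (fun y => Cconj (f y)) x (Cconj l).
Proof. intros [A B]. split; simpl; auto. apply D_opp; auto. Qed.

Lemma CD_cis a x : CD (fun y => cis (a * y)) x (Cmult (0, a) (cis (a * x))).
Proof.
  split; simpl.
  - eapply D_ext; [intros; reflexivity| |apply D_cos]. ring.
  - eapply D_ext; [intros; reflexivity| |apply D_sin]. ring.
Qed.

Lemma D_zs lo n (h : Z -> R -> R) l x : (forall j, is_derive (h j) x (l j)) ->
  is_derive (fun y => zs lo n (fun j => h j y)) x (zs lo n l).
Proof.
  revert lo; induction n; intros lo H; simpl.
  - apply D_const.
  - apply D_plus; auto.
Qed.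

Lemma CD_zsC lo n (h : Z -> R -> C) l x : (forall j, CD (h j) x (l j)) ->
  CD (fun y => zsC lo n (fun j => h j y)) x (zsC lo n l).
Proof.
  intros H. split; unfold zsC; simpl.
  - apply (D_zs lo n (fun j y => fst (h j y))). intros; apply H.
  - apply (D_zs lo n (fun j y => snd (h j y))). intros; apply H.
Qed.

Definition CC (f : R -> C) (x : R) :=
  continuous (fun y => fst (f y)) x /\ continuous (fun y => snd (f y)) x.

Lemma CD_CC f x l : CD f x l -> CC f x.
Proof.
  intros [A B]. split; apply (@ex_derive_continuous R_AbsRing R_NormedModule); eexists; eauto.
Qed.

Definition CI (f : R -> C) (a b : R) (l : C) :=
  is_RInt (fun y => fst (f y)) a b (fst l) /\ is_RInt (fun y => snd (f y)) a b (snd l).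

Lemma CI_RInt f a b l : CI f a b l -> RInt (V := C_R_CompleteNormedModule) f a b = l.
Proof.
  intros [H1 H2]. destruct l as [l1 l2]. apply is_RInt_unique.
  apply (is_RInt_fct_extend_pair (U := R_NormedModule) (V := R_NormedModule)); auto.
Qed.

Lemma CI_unique f a b l l' : CI f a b l -> CI f a b l' -> l = l'.
Proof.
  intros [A B] [C D]. apply injective_projections.
  - apply (@is_RInt_unique R_CompleteNormedModule) in A. apply (@is_RInt_unique R_CompleteNormedModule) in C. congruence.
  - apply (@is_RInt_unique R_CompleteNormedModule) in B. apply (@is_RInt_unique R_CompleteNormedModule) in D. congruence.
Qed.

Lemma CI_ext f g a b l : (forall y, f y = g y) -> CI f a b l -> CI g a b l.
Proof.
  intros H [A B]. split; [eapply is_RInt_ext; [|apply A]|eapply is_RInt_ext; [|apply B]]; intros; cbv beta; rewrite H; auto.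
Qed.

Lemma CI_plus f g a b lf lg : CI f a b lf -> CI g a b lg -> CI (fun y => Cplus (f y) (g y)) a b (Cplus lf lg).
Proof.
  intros [A B] [C D]. split; simpl; [apply (is_RInt_plus (fun y => fst (f y)) (fun y => fst (g y)))|apply (is_RInt_plus (fun y => snd (f y)) (fun y => snd (g y)))]; auto.
Qed.

Lemma R_RInt_lin (f g : R -> R) (a b c d If Ig : R) : is_RInt f a b If -> is_RInt g a b Ig ->
  is_RInt (fun y => c * f y + d * g y) a b (c * If + d * Ig).
Proof.
  intros A B. apply (is_RInt_plus (fun y => c * f y) (fun y => d * g y));
  [apply (is_RInt_scal f a b c If)|apply (is_RInt_scal g a b d Ig)]; auto.
Qed.

Lemma RInt_val (f : R -> R) (a b l l' : R) : is_RInt f a b l -> l = l' -> is_RInt f a b l'.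
Proof. intros H ->; auto. Qed.

Lemma CI_mult_l c f a b l : CI f a b l -> CI (fun y => Cmult c (f y)) a b (Cmult c l).
Proof.
  intros [A B]. split; simpl.
  - apply (RInt_val _ a b (fst c * fst l + - snd c * snd l)); [|ring].
    eapply is_RInt_ext; [|apply (R_RInt_lin _ _ a b (fst c) (- snd c) _ _ A B)]. intros; simpl; ring.
  - apply (RInt_val _ a b (fst c * snd l + snd c * fst l)); [|ring].
    eapply is_RInt_ext; [|apply (R_RInt_lin _ _ a b (fst c) (snd c) _ _ B A)]. intros; simpl; ring.
Qed.

Lemma CI_conj f a b l : CI f a b l -> CI (fun y => Cconj (f y)) a b (Cconj l).
Proof.
  intros [A B]. split; simpl; auto.
  apply (RInt_val _ a b (opp (snd l))); [|auto].
  apply (is_RInt_opp (fun y => snd (f y))); auto.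
Qed.

Lemma CI_zero a b : CI (fun _ => RtoC 0) a b (RtoC 0).
Proof.
  split; simpl; eapply RInt_val; try apply (is_RInt_const a b 0); unfold scal; simpl; unfold mult; simpl; ring.
Qed.

Lemma CI_val f a b l l' : CI f a b l -> l = l' -> CI f a b l'.
Proof. intros H ->; auto. Qed.

Lemma CI_zsC lo n (h : Z -> R -> C) l a b : (forall j, CI (h j) a b (l j)) ->
  CI (fun y => zsC lo n (fun j => h j y)) a b (zsC lo n l).
Proof.
  revert lo; induction n; intros lo H.
  - eapply CI_ext; [|apply CI_zero]. intros; unfold zsC; simpl; auto.
  - apply (CI_ext (fun y => Cplus (h lo y) (zsC (lo+1) n (fun j => h j y)))).
    { intros; unfold zsC; simpl; auto. }
    apply (CI_val _ _ _ (Cplus (l lo) (zsC (lo+1) n l))). apply CI_plus; auto.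
    unfold zsC; simpl; auto.
Qed.

Lemma CI_exists f a b : (forall y, CC f y) -> exists l, CI f a b l.
Proof.
  intros H.
  assert (E1 : ex_RInt (fun y => fst (f y)) a b) by (apply (@ex_RInt_continuous R_CompleteNormedModule); intros; apply H).
  assert (E2 : ex_RInt (fun y => snd (f y)) a b) by (apply (@ex_RInt_continuous R_CompleteNormedModule); intros; apply H).
  destruct E1 as [l1 H1]. destruct E2 as [l2 H2]. exists (l1, l2). split; auto.
Qed.

Lemma CI_derive F f a b : (forall y, CD F y (f y)) -> (forall y, CC f y) ->
  CI f a b (Cminus (F b) (F a)).
Proof.
  intros HD HC. split; simpl.
  - eapply RInt_val. apply (@is_RInt_derive R_CompleteNormedModule (fun y => fst (F y)) (fun y => fst (f y))).
    intros; apply HD. intros; apply HC. unfold minus, plus, opp; simpl. ring.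
  - eapply RInt_val. apply (@is_RInt_derive R_CompleteNormedModule (fun y => snd (F y)) (fun y => snd (f y))).
    intros; apply HD. intros; apply HC. unfold minus, plus, opp; simpl. ring.
Qed.

Lemma CD_cmul c f x l : CD f x l -> CD (fun y => Cmult c (f y)) x (Cmult c l).
Proof.
  intros H. eapply CD_ext; [intros; reflexivity| |apply (CD_mult (fun _ => c) f x (RtoC 0) l); auto; apply CD_const].
  ring.
Qed.

Lemma CD_mulc f x l c : CD f x l -> CD (fun y => Cmult (f y) c) x (Cmult l c).
Proof.
  intros H. eapply CD_ext; [intros; reflexivity| |apply (CD_mult f (fun _ => c) x l (RtoC 0)); auto; apply CD_const].
  ring.
Qed.

Lemma Cconj_div_R w r : Cconj (Cdiv w (RtoC r)) = Cdiv (Cconj w) (RtoC r).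
Proof. rewrite !Cdiv_R'. rewrite Cmult_conj. f_equal. Ctac. Qed.

Lemma Xdot_CD1 N sg psi (Zf : R -> fcoef) Zd x k : suppC N psi ->
  (forall m, CD (fun y => Zf y m) x (Zd m)) ->
  CD (fun y => Xdot sg psi (Zf y) k) x (Xdot sg psi Zd k).
Proof.
  intros Hs HZ.
  apply (CD_ext (fun y => Cmult (iC k) (bxC N (termD sg psi (Zf y) k))) _ _ (Cmult (iC k) (bxC N (termD sg psi Zd k)))).
  { intros; rewrite (Xdot_fin N); auto. } { rewrite (Xdot_fin N); auto. }
  apply CD_cmul. apply (CD_zsC _ _ (fun j y => termD sg psi (Zf y) k j)). intros j. unfold termD.
  destruct (_ || _)%bool. apply CD_const. apply CD_cmul, CD_cmul. auto.
Qed.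

Lemma Xdot_CD2 N psi (Zf : R -> fcoef) Zd x k : suppC N psi ->
  (forall m, CD (fun y => Zf y m) x (Zd m)) ->
  exists l, CD (fun y => Xdot y psi (Zf y) k) x l.
Proof.
  intros Hs HZ.
  set (A := fun k1 => -3 * IZR k * IZR k1 * IZR (k - k1)).
  set (L := fun k1 => if orb (Z.eqb k1 0) (Z.eqb k1 k) then RtoC 0 else
     Cplus (Cmult (Cmult (0, A k1) (cis (A k1 * x))) (Cmult (psi k1) (Zf x (k - k1)%Z)))
           (Cmult (cis (A k1 * x)) (Cmult (psi k1) (Zd (k - k1)%Z)))).
  exists (Cmult (iC k) (zsC (- Z.of_nat N) (2 * N + 1) L)).
  apply (CD_ext (fun y => Cmult (iC k) (bxC N (termD y psi (Zf y) k))) _ _ (Cmult (iC k) (zsC (- Z.of_nat N) (2 * N + 1) L))).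
  { intros; rewrite (Xdot_fin N); auto. } { auto. }
  apply CD_cmul. apply (CD_zsC _ _ (fun j y => termD y psi (Zf y) k j)). intros j. unfold termD, L.
  destruct (_ || _)%bool. apply CD_const.
  apply (CD_mult (fun y => cis (A j * y)) (fun y => Cmult (psi j) (Zf y (k - j)%Z))).
  apply CD_cis. apply CD_cmul. auto.
Qed.

Section Fin2.
Variables (N : nat) (psi : fcoef) (s t : R).
Hypotheses (Hs : suppC N psi) (H0 : psi 0%Z = RtoC 0) (Hr : realf psi).

Definition Xs (tau : R) : fcoef := Xts tau s psi psi.
Definition Xd (tau : R) : fcoef := Xdot tau psi psi.

Lemma Xs_fin tau m : Xs tau m = bxC N (termX tau s psi psi m).
Proof. exact (Xts_fin N tau s psi psi m Hs). Qed.

Lemma Xs_supp tau : suppC (2 * N) (Xs tau).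
Proof.
  intros m Hm. rewrite Xs_fin. unfold bxC. apply zsC_zero. intros j Hj. unfold termX.
  destruct (_ || _)%bool; auto. rewrite (Hs (m - j)%Z) by lia. ring.
Qed.

Lemma Xs_0 tau : Xs tau 0%Z = RtoC 0.
Proof.
  rewrite Xs_fin. unfold bxC. apply zsC_zero. intros j Hj. unfold termX.
  destruct (_ || _)%bool; auto.
  replace (-3 * IZR 0 * IZR j * IZR (0 - j) * s) with 0 by (simpl; ring).
  replace (-3 * IZR 0 * IZR j * IZR (0 - j) * tau) with 0 by (simpl; ring).
  replace (Cminus (cis 0) (cis 0)) with (RtoC 0) by ring. rewrite Cdiv_R'. ring.
Qed.

Lemma Xs_s m : Xs s m = RtoC 0.
Proof.
  rewrite Xs_fin. unfold bxC. apply zsC_zero. intros j Hj. unfold termX.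
  destruct (_ || _)%bool; auto.
  replace (Cminus (cis (-3 * IZR m * IZR j * IZR (m - j) * s)) (cis (-3 * IZR m * IZR j * IZR (m - j) * s))) with (RtoC 0) by ring.
  rewrite Cdiv_R'. ring.
Qed.

Lemma Xs_real tau : realf (Xs tau).
Proof.
  intros m. rewrite !Xs_fin. rewrite <- bxC_conj. rewrite <- (bxC_refl0 N (fun j => Cconj (termX tau s psi psi m j))).
  apply bxC_ext. intros j _. unfold termX.
  destruct (Z.eqb_spec j 0) as [E|E]; simpl.
  { subst. simpl. rewrite Cconj_0'. auto. }
  destruct (Z.eqb_spec (- j) 0) as [E1|E1]; [lia|]. simpl.
  destruct (Z.eqb_spec j (- m)) as [E2|E2]; destruct (Z.eqb_spec (- j) m) as [E3|E3]; try lia; simpl.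
  { rewrite Cconj_0'; auto. }
  rewrite Cmult_conj, Cconj_div_R, Cmult_conj, !(realf_conj _ _ Hr).
  unfold Cminus. rewrite Cplus_conj, Copp_conj, !cis_conj.
  replace (- - j)%Z with j by lia. replace (- (m - - j))%Z with (- m - j)%Z by lia.
  rewrite !minus_IZR, !opp_IZR.
  replace (- (-3 * IZR m * - IZR j * (IZR m - - IZR j) * s)) with (-3 * - IZR m * IZR j * (- IZR m - IZR j) * s) by ring.
  replace (- (-3 * IZR m * - IZR j * (IZR m - - IZR j) * tau)) with (-3 * - IZR m * IZR j * (- IZR m - IZR j) * tau) by ring.
  replace (6 * - IZR j * (IZR m - - IZR j)) with (6 * IZR j * (- IZR m - IZR j)) by ring.
  auto.
Qed.

Lemma CD_Xs m x : CD (fun tau => Xs tau m) x (Xd x m).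
Proof.
  apply (CD_ext (fun tau => bxC N (termX tau s psi psi m)) _ _ (bxC N (fun j => Cmult (iC m) (termD x psi psi m j)))).
  { intros; rewrite Xs_fin; auto. }
  { unfold Xd. rewrite (Xdot_fin N); auto. rewrite bxC_mult_l. auto. }
  apply (CD_zsC _ _ (fun j tau => termX tau s psi psi m j)). intros j. unfold termX, termD.
  destruct (Z.eqb_spec j 0) as [E|E]; simpl.
  { eapply CD_ext; [intros; reflexivity| |apply CD_const]. ring. }
  destruct (Z.eqb_spec j m) as [E'|E']; simpl.
  { eapply CD_ext; [intros; reflexivity| |apply CD_const]. ring. }
  set (A := -3 * IZR m * IZR j * IZR (m - j)).
  set (r := 6 * IZR j * IZR (m - j)).
  set (c := Cmult (psi j) (psi (m - j)%Z)).
  apply (CD_ext (fun y => Cmult (Cmult (Cminus (cis (A * s)) (cis (A * y))) (RtoC (/ r))) c) _ _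
     (Cmult (Cmult (Cminus (RtoC 0) (Cmult (0, A) (cis (A * x)))) (RtoC (/ r))) c)).
  { intros y. rewrite Cdiv_R'. reflexivity. }
  2:{ apply CD_mulc, CD_mulc. apply CD_minus. apply CD_const. apply CD_cis. }
  assert (EE : - A * / r = IZR m / 2).
  { assert (Hj : IZR j <> 0) by (apply not_0_IZR; auto).
    assert (Hmj : IZR m - IZR j <> 0) by (intros C; apply E'; apply eq_IZR; lra).
    unfold A, r. rewrite minus_IZR. field. split; auto. }
  unfold iC. rewrite <- EE. Ctac.
Qed.

Lemma CD_Xd_ex m x : exists l, CD (fun tau => Xd tau m) x l.
Proof.
  apply (Xdot_CD2 N psi (fun _ => psi) (fun _ => RtoC 0)); auto. intros; apply CD_const.
Qed.

Lemma CC_Xd m x : CC (fun tau => Xd tau m) x.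
Proof. destruct (CD_Xd_ex m x) as [l H]. eapply CD_CC; eauto. Qed.


Lemma choice_CD (F : Z -> R -> C) x : (forall k, exists l, CD (F k) x l) ->
  exists L : Z -> C, forall k, CD (F k) x (L k).
Proof.
  intros H. exists (fun k => proj1_sig (constructive_indefinite_description _ (H k))).
  intros k. exact (proj2_sig (constructive_indefinite_description _ (H k))).
Qed.

Lemma inner_int sg k : RInt (V := C_R_CompleteNormedModule) (fun sg1 => Xdot sg psi (Xdot sg1 psi psi) k) s sg
  = Xdot sg psi (Xs sg) k.
Proof.
  apply CI_RInt. eapply CI_val. apply (CI_derive (fun y => Xdot sg psi (Xs y) k)).
  - intros y. apply (Xdot_CD1 N); auto. intros m. apply CD_Xs.
  - intros y. destruct (choice_CD (fun m tau => Xd tau m) y) as [L HL].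
    { intros m; apply CD_Xd_ex. }
    eapply CD_CC. apply (Xdot_CD1 N sg psi Xd L y k); auto.
  - assert (Xdot sg psi (Xs s) k = RtoC 0) as ->.
    { rewrite (Xdot_fin N) by auto. unfold bxC. rewrite zsC_zero. ring.
      intros j _. unfold termD. destruct (_ || _)%bool; auto. rewrite Xs_s. ring. }
    ring.
Qed.

Lemma X2_form k : X2ts_trig t s psi psi psi k =
  Cmult (RtoC 2) (RInt (V := C_R_CompleteNormedModule) (fun sg => Xdot sg psi (Xs sg) k) s t).
Proof.
  unfold X2ts_trig. f_equal. apply RInt_ext. intros x _. apply inner_int.
Qed.

Lemma CD_q k x : exists l, CD (fun sg => Xdot sg psi (Xs sg) k) x l.
Proof. apply (Xdot_CD2 N psi Xs (Xd x)); auto. intros; apply CD_Xs. Qed.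

Definition Ik k := RInt (V := C_R_CompleteNormedModule) (fun sg => Xdot sg psi (Xs sg) k) s t.

Lemma CI_q k : CI (fun sg => Xdot sg psi (Xs sg) k) s t (Ik k).
Proof.
  destruct (CI_exists (fun sg => Xdot sg psi (Xs sg) k) s t) as [l Hl].
  { intros y. destruct (CD_q k y) as [l H]. eapply CD_CC; eauto. }
  unfold Ik. rewrite (CI_RInt _ _ _ _ Hl). auto.
Qed.

Definition GG tau := bxC (2 * N) (fun k => Cmult (Xs tau k) (Cconj (Xs tau k))).

Lemma CD_GG x : CD GG x (Cmult (RtoC (-4)) (PP N psi (Xs x) x)).
Proof.
  assert (V : bxC (2 * N) (fun k => Cplus (Cmult (Xd x k) (Cconj (Xs x k))) (Cmult (Xs x k) (Cconj (Xd x k))))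
     = Cmult (RtoC (-4)) (PP N psi (Xs x) x)).
  { rewrite bxC_plus.
    assert (E : bxC (2 * N) (fun k => Cmult (Xs x k) (Cconj (Xd x k))) = Cconj (QQ N psi (Xs x) x)).
    { unfold QQ. rewrite <- bxC_conj. apply bxC_ext. intros. rewrite Cmult_conj, Cconj_involutive'. unfold Xd. ring. }
    rewrite E. change (bxC (2 * N) (fun k => Cmult (Xd x k) (Cconj (Xs x k)))) with (QQ N psi (Xs x) x).
    pose proof (alg2 N psi (Xs x) x Hs H0 Hr (Xs_0 x) (Xs_real x)) as A2.
    pose proof (PP_real N psi (Xs x) x Hs H0 Hr (Xs_0 x) (Xs_real x)) as PR.
    assert (QQ N psi (Xs x) x = Cmult (RtoC (-2)) (PP N psi (Xs x) x)) as ->.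
    { apply (f_equal (fun z => Cminus z (Cmult (RtoC 2) (PP N psi (Xs x) x)))) in A2.
      replace (Cmult (RtoC (-2)) (PP N psi (Xs x) x)) with (Cminus (RtoC 0) (Cmult (RtoC 2) (PP N psi (Xs x) x))) by (Ctac).
      rewrite <- A2. ring. }
    rewrite Cmult_conj, PR. replace (Cconj (RtoC (-2))) with (RtoC (-2)) by Ctac.
    set (P := PP N psi (Xs x) x). clearbody P. Ctac. }
  rewrite <- V. unfold GG, bxC.
  apply (CD_zsC _ _ (fun k tau => Cmult (Xs tau k) (Cconj (Xs tau k)))). intros k.
  apply CD_mult. apply CD_Xs. apply CD_conj, CD_Xs.
Qed.

Lemma GG_s : GG s = RtoC 0.
Proof. unfold GG, bxC. apply zsC_zero. intros. rewrite Xs_s. ring. Qed.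

Lemma CC_PP y : CC (fun sg => PP N psi (Xs sg) sg) y.
Proof.
  destruct (choice_CD (fun k sg => Xdot sg psi (Xs sg) k) y) as [L HL].
  { intros k; apply CD_q. }
  eapply CD_CC. unfold PP. apply (CD_zsC _ _ (fun k sg => Cmult (psi k) (Cconj (Xdot sg psi (Xs sg) k)))).
  intros k. apply CD_cmul, CD_conj. apply HL.
Qed.

Lemma int_PP : bxC N (fun k => Cmult (psi k) (Cconj (Ik k))) = Cmult (RtoC (- / 4)) (GG t).
Proof.
  eapply CI_unique.
  - unfold bxC. apply (CI_zsC _ _ (fun k sg => Cmult (psi k) (Cconj (Xdot sg psi (Xs sg) k)))).
    intros k. apply CI_mult_l, CI_conj, CI_q.
  - eapply CI_val. apply (CI_derive (fun tau => Cmult (RtoC (- / 4)) (GG tau)) (fun sg => PP N psi (Xs sg) sg)).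
    + intros y. eapply CD_ext; [intros; reflexivity| |apply CD_cmul, CD_GG].
      rewrite Cmult_assoc. replace (Cmult (RtoC (- / 4)) (RtoC (-4))) with (RtoC 1) by (Ctac; field). ring.
    + apply CC_PP.
    + rewrite GG_s. ring.
Qed.

Lemma fin2 : Cplus (Cmult (RtoC 2) (l2inner psi (fun k => X2ts_trig t s psi psi psi k)))
   (l2inner (Xts t s psi psi) (Xts t s psi psi)) = RtoC 0.
Proof.
  unfold l2inner.
  rewrite (sumZ_fin N).
  2:{ intros k Hk. rewrite (Hs k Hk). ring. }
  rewrite (bxC_ext _ _ (fun k => Cmult (RtoC 2) (Cmult (psi k) (Cconj (Ik k))))).
  2:{ intros k _. rewrite X2_form. fold (Ik k). rewrite Cmult_conj.
      replace (Cconj (RtoC 2)) with (RtoC 2) by Ctac. ring. }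
  rewrite bxC_mult_l, int_PP.
  rewrite (sumZ_fin (2 * N)).
  2:{ intros k Hk. change (Xts t s psi psi) with (Xs t). rewrite (Xs_supp t k Hk). ring. }
  change (bxC (2 * N) (fun k => Cmult (Xts t s psi psi k) (Cconj (Xts t s psi psi k)))) with (GG t).
  Ctac; field.
Qed.

End Fin2.

Lemma zs_single lo n g j : (forall k, 0 <= g k) -> (lo <= j < lo + Z.of_nat n)%Z -> g j <= zs lo n g.
Proof.
  intros Hp. revert lo; induction n; intros lo Hj; simpl. lia.
  destruct (Z.eq_dec j lo) as [->|E].
  - pose proof (zs_nonneg (lo+1) n g Hp). lra.
  - pose proof (IHn (lo+1)%Z ltac:(lia)). pose proof (Hp lo). lra.
Qed.

Lemma zs_sub_le lo n lo' n' g : (forall k, 0 <= g k) ->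
  (lo' <= lo)%Z -> (lo + Z.of_nat n <= lo' + Z.of_nat n')%Z -> zs lo n g <= zs lo' n' g.
Proof.
  intros Hp H1 H2.
  set (a := Z.to_nat (lo - lo')). set (b := Z.to_nat (lo' + Z.of_nat n' - lo - Z.of_nat n)).
  assert (E : n' = (a + (n + b))%nat) by (unfold a, b; lia).
  rewrite E, !zs_add. replace (lo' + Z.of_nat a)%Z with lo by (unfold a; lia).
  pose proof (zs_nonneg lo' a g Hp). pose proof (zs_nonneg (lo + Z.of_nat n) b g Hp). lra.
Qed.

Lemma single_le_sum g j : (forall k, 0 <= g k) -> summableZR g -> g j <= sumZR g.
Proof.
  intros Hp Hs. eapply Rle_trans; [|apply (bx_le_sum g (Z.to_nat (Z.abs j))); auto].
  unfold bx. apply zs_single; auto. lia.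
Qed.

Lemma shift_le_sum g j M : (forall k, 0 <= g k) -> summableZR g ->
  zs (- Z.of_nat M) (2 * M + 1) (fun k => g (k - j)%Z) <= sumZR g.
Proof.
  intros Hp Hs.
  rewrite (zs_ext _ _ _ (fun k => g (- j + k)%Z)) by (intros; f_equal; lia).
  rewrite zs_shift.
  eapply Rle_trans; [|apply (bx_le_sum g (M + Z.to_nat (Z.abs j))); auto].
  unfold bx. apply zs_sub_le; auto; lia.
Qed.

Lemma zs_sumZR lo n (f : Z -> Z -> R) : (forall k, summableZR (f k)) ->
  summableZR (fun j => zs lo n (fun k => f k j)) /\
  zs lo n (fun k => sumZR (f k)) = sumZR (fun j => zs lo n (fun k => f k j)).
Proof.
  revert lo; induction n; intros lo H; simpl.
  - rewrite (proj2 (sumZR_fin 0 (fun _ => 0) ltac:(intros ? ?; auto))). unfold bx; simpl.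
    split; [apply (sumZR_fin 0); intros ? ?; auto|ring].
  - destruct (IHn (lo + 1)%Z H) as [S1 E1].
    destruct (summable_plus (f lo) _ (H lo) S1) as [S2 E2].
    split; auto. rewrite E2, E1. auto.
Qed.

Lemma inv2_summable : summableZR (fun k => (/ IZR k) ^ 2) /\ sumZR (fun k => (/ IZR k) ^ 2) <= 4.
Proof.
  apply nonneg_bound. intros; apply pow2_ge_0.
  assert (forall M, bx M (fun k => (/ IZR k) ^ 2) <= 4 - 4 / (INR M + 1)).
  { induction M.
    - rewrite bx_0. simpl. rewrite Rinv_0. lra.
    - rewrite bx_S. unfold pr. rewrite opp_IZR, <- INR_IZR_INZ, S_INR.
      replace ((/ - (INR M + 1)) ^ 2) with ((/ (INR M + 1)) ^ 2).
      2:{ rewrite Rinv_opp. ring. }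
      pose proof (pos_INR M).
      set (x := INR M + 1) in *. assert (Hx : 1 <= x) by (unfold x; lra).
      assert (E : 4 / x - 4 / (x + 1) - ((/ x) ^ 2 + (/ x) ^ 2) = (2 * x - 2) / (x ^ 2 * (x + 1))) by (field; lra).
      assert (0 <= (2 * x - 2) / (x ^ 2 * (x + 1))) by (apply Rdiv_le_0_compat; nra).
      lra. }
  intros M. specialize (H M). pose proof (pos_INR M).
  assert (0 <= 4 / (INR M + 1)) by (apply Rdiv_le_0_compat; lra). lra.
Qed.

Lemma xy_le (x y : R) : Rabs (x * y) <= x ^ 2 + y ^ 2.
Proof.
  rewrite Rabs_mult. pose proof (Rabs_pos x); pose proof (Rabs_pos y).
  replace (x ^ 2) with (Rabs x ^ 2) by (apply pow2_abs).
  replace (y ^ 2) with (Rabs y ^ 2) by (apply pow2_abs).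
  nra.
Qed.

Lemma Cmod_minus_le2 a b : Cmod (Cminus (cis a) (cis b)) <= 2.
Proof.
  unfold Cminus. eapply Rle_trans; [apply Cmod_triangle|]. rewrite Cmod_opp, !Cmod_cis. lra.
Qed.

Section Anal.
Variables (phi : fcoef) (s t : R).
Hypothesis (Hphi : real_L2_0 phi).

Definition n2 k := Cmod (phi k) ^ 2.
Definition ia (k : Z) := Rabs (/ IZR k).
Definition aa k := Cmod (phi k) * ia k.

Lemma n2_summable : summableZR n2.
Proof. destruct Hphi as [H _]. exact H. Qed.

Lemma aa_nonneg k : 0 <= aa k.
Proof. unfold aa, ia. apply Rmult_le_pos; [apply Cmod_ge_0|apply Rabs_pos]. Qed.

Lemma aa_summable : summableZR aa.
Proof.
  destruct (summable_plus n2 _ n2_summable (proj1 inv2_summable)) as [S _].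
  apply (summable_le aa (fun k => n2 k + (/ IZR k) ^ 2)); auto. intros k. unfold aa, ia, n2.
  eapply Rle_trans; [apply xy_le|]. rewrite pow2_abs. lra.
Qed.

Definition AA := sumZR aa.

Lemma aa_le k : aa k <= AA.
Proof. apply single_le_sum; [apply aa_nonneg|apply aa_summable]. Qed.

Lemma AA_nonneg : 0 <= AA.
Proof. eapply Rle_trans; [apply (aa_nonneg 0%Z)|apply aa_le]. Qed.

Lemma conv_summable k : summableZR (fun k1 => aa k1 * aa (k - k1)%Z).
Proof.
  apply (summable_le _ (fun k1 => AA * aa k1)).
  - intros k1. rewrite Rabs_right. 2:{ apply Rle_ge, Rmult_le_pos; apply aa_nonneg. }
    rewrite Rmult_comm. apply Rmult_le_compat_r; [apply aa_nonneg|apply aa_le].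
  - apply summable_scal, aa_summable.
Qed.

Definition dd k := sumZR (fun k1 => aa k1 * aa (k - k1)%Z).

Lemma dd_nonneg k : 0 <= dd k.
Proof. apply sumZR_nonneg; [intros; apply Rmult_le_pos; apply aa_nonneg|apply conv_summable]. Qed.

Lemma dd_le k : dd k <= AA * AA.
Proof.
  unfold dd. destruct (summable_scal AA aa aa_summable) as [S E].
  eapply Rle_trans. 2:{ unfold AA at 2. rewrite <- E. apply Rle_refl. }
  eapply Rle_trans; [apply Rle_abs|]. apply summable_le; auto.
  intros k1. rewrite Rabs_right. 2:{ apply Rle_ge, Rmult_le_pos; apply aa_nonneg. }
  rewrite Rmult_comm. apply Rmult_le_compat_r; [apply aa_nonneg|apply aa_le].
Qed.

Lemma dd_summable : summableZR dd /\ sumZR dd <= AA * AA.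
Proof.
  apply nonneg_bound; [apply dd_nonneg|]. intros M. unfold bx, dd.
  destruct (zs_sumZR (- Z.of_nat M) (2 * M + 1) (fun k k1 => aa k1 * aa (k - k1)%Z) conv_summable) as [S E].
  rewrite E. destruct (summable_scal AA aa aa_summable) as [S2 E2].
  eapply Rle_trans. 2:{ unfold AA at 2. rewrite <- E2. apply Rle_refl. }
  eapply Rle_trans; [apply Rle_abs|]. apply summable_le; auto.
  intros k1. rewrite zs_scal. rewrite Rabs_right.
  2:{ apply Rle_ge, Rmult_le_pos. apply aa_nonneg. apply zs_nonneg. intros; apply aa_nonneg. }
  rewrite Rmult_comm. apply Rmult_le_compat_r; [apply aa_nonneg|].
  apply shift_le_sum; [apply aa_nonneg|apply aa_summable].
Qed.

Lemma termX_bound psi k k1 : (forall j, Cmod (psi j) <= Cmod (phi j)) ->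
  Cmod (termX t s psi psi k k1) <= aa k1 * aa (k - k1)%Z.
Proof.
  intros Hp. unfold termX. destruct (_ || _)%bool.
  { rewrite Cmod_0. apply Rmult_le_pos; apply aa_nonneg. }
  rewrite Cdiv_R', !Cmod_mult, Cmod_R.
  unfold aa, ia. rewrite !Rinv_mult, !Rabs_mult.
  pose proof (Cmod_minus_le2 (-3 * IZR k * IZR k1 * IZR (k - k1) * s) (-3 * IZR k * IZR k1 * IZR (k - k1) * t)).
  pose proof (Cmod_ge_0 (Cminus (cis (-3 * IZR k * IZR k1 * IZR (k - k1) * s)) (cis (-3 * IZR k * IZR k1 * IZR (k - k1) * t)))).
  pose proof (Hp k1); pose proof (Hp (k - k1)%Z).
  pose proof (Cmod_ge_0 (psi k1)); pose proof (Cmod_ge_0 (psi (k - k1)%Z)).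
  pose proof (Rabs_pos (/ IZR k1)); pose proof (Rabs_pos (/ IZR (k - k1))).
  assert (Rabs (/ 6) = / 6) by (rewrite Rabs_right; lra).
  rewrite H7.
  set (u := Cmod (Cminus _ _)) in *.
  set (p := Cmod (psi k1)) in *. set (q := Cmod (psi (k - k1)%Z)) in *.
  set (x := Rabs (/ IZR k1)) in *. set (y := Rabs (/ IZR (k - k1))) in *.
  assert (u * (/ 6 * x * y) * (p * q) <= 2 * (/ 6 * x * y) * (p * q)).
  { apply Rmult_le_compat_r. nra. apply Rmult_le_compat_r. nra. auto. }
  assert (2 * (/ 6 * x * y) * (p * q) <= (Cmod (phi k1) * x) * (Cmod (phi (k - k1)%Z) * y)).
  { assert (p * q <= Cmod (phi k1) * Cmod (phi (k - k1)%Z)) by (apply Rmult_le_compat; auto).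
    assert (0 <= x * y) by nra.
    assert (x * y * (p * q) <= x * y * (Cmod (phi k1) * Cmod (phi (k - k1)%Z))) by (apply Rmult_le_compat_l; auto).
    assert (0 <= x * y * (p * q)) by (apply Rmult_le_pos; nra).
    replace (2 * (/ 6 * x * y) * (p * q)) with (/3 * (x * y * (p * q))) by field.
    replace (Cmod (phi k1) * x * (Cmod (phi (k - k1)%Z) * y)) with (x * y * (Cmod (phi k1) * Cmod (phi (k - k1)%Z))) by ring.
    lra. }
  lra.
Qed.

Lemma Xts_comp_bound psi k (pr : C -> R) : (forall j, Cmod (psi j) <= Cmod (phi j)) ->
  (forall z, Rabs (pr z) <= Cmod z) ->
  summableZR (fun k1 => pr (termX t s psi psi k k1)) /\
  Rabs (sumZR (fun k1 => pr (termX t s psi psi k k1))) <= dd k.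
Proof.
  intros Hp Hpr. apply summable_le; [|apply conv_summable].
  intros k1. eapply Rle_trans; [apply Hpr|apply termX_bound; auto].
Qed.

Lemma Xts_fst_bound psi k : (forall j, Cmod (psi j) <= Cmod (phi j)) -> Rabs (fst (Xts t s psi psi k)) <= dd k.
Proof. intros Hp. apply (Xts_comp_bound psi k fst Hp fst_le_Cmod). Qed.
Lemma Xts_snd_bound psi k : (forall j, Cmod (psi j) <= Cmod (phi j)) -> Rabs (snd (Xts t s psi psi k)) <= dd k.
Proof. intros Hp. apply (Xts_comp_bound psi k snd Hp snd_le_Cmod). Qed.
Lemma Xts_Cmod_bound psi k : (forall j, Cmod (psi j) <= Cmod (phi j)) -> Cmod (Xts t s psi psi k) <= 2 * dd k.
Proof.
  intros Hp. eapply Rle_trans; [apply Cmod_le_sum|].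
  pose proof (Xts_fst_bound psi k Hp); pose proof (Xts_snd_bound psi k Hp). lra.
Qed.

End Anal.

Lemma fst_l2inner f g : fst (l2inner f g) = 2 * PI * sumZR (fun k => fst (Cmult (f k) (Cconj (g k)))).
Proof. unfold l2inner, sumZ. simpl. ring. Qed.
Lemma snd_l2inner f g : snd (l2inner f g) = 2 * PI * sumZR (fun k => snd (Cmult (f k) (Cconj (g k)))).
Proof. unfold l2inner, sumZ. simpl. ring. Qed.

Lemma lim_const_eq (u : nat -> R) (c l : R) : (forall N, u N = c) -> is_lim_seq u l -> l = c.
Proof.
  intros H Hl. assert (is_lim_seq u c) by (eapply is_lim_seq_ext; [intros; symmetry; apply H|apply is_lim_seq_const]).
  apply is_lim_seq_unique in Hl. apply is_lim_seq_unique in H0. rewrite Hl in H0. injection H0 as H0 || idtac; auto.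
Qed.

Lemma amgm lam x y : 0 < lam -> x * y <= (lam * x ^ 2 + y ^ 2 / lam) / 2.
Proof.
  intros Hl. assert (0 <= (lam * x - y) ^ 2) by apply pow2_ge_0.
  apply Rmult_le_reg_l with (2 * lam); [lra|].
  replace (2 * lam * ((lam * x ^ 2 + y ^ 2 / lam) / 2)) with (lam * lam * x ^ 2 + y ^ 2) by (field; lra).
  nra.
Qed.

Lemma lam_conv (x : R) (y e f : nat -> R) (P c : R) :
  0 <= P -> 0 <= c -> is_lim_seq e 0 -> is_lim_seq f 0 -> (forall N, 0 <= e N) -> (forall N, 0 <= f N) ->
  (forall N lam, 0 < lam -> Rabs (x - y N) <= c * (lam * (e N + f N) + P / lam)) -> is_lim_seq y x.
Proof.
  intros HP Hc He Hf He0 Hf0 H.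
  apply is_lim_seq_spec. intros eps. destruct eps as [eps Heps]. simpl.
  set (lam := 2 * c * P / eps + 1).
  assert (Hlam : 0 < lam) by (unfold lam; assert (0 <= 2 * c * P / eps) by (apply Rdiv_le_0_compat; nra); lra).
  assert (Hef := is_lim_seq_plus' _ _ _ _ He Hf). rewrite Rplus_0_r in Hef.
  apply is_lim_seq_spec in Hef.
  assert (Hd : 0 < eps / (2 * (c * lam + 1))) by (apply Rdiv_lt_0_compat; nra).
  destruct (Hef (mkposreal _ Hd)) as [N0 HN0]. exists N0. intros N HN.
  specialize (HN0 N HN). simpl in HN0. rewrite Rminus_0_r, Rabs_right in HN0 by (specialize (He0 N); specialize (Hf0 N); lra).
  rewrite Rabs_minus_sym. eapply Rle_lt_trans; [apply (H N lam Hlam)|].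
  assert (A1 : c * P / lam <= eps / 2).
  { unfold Rdiv at 1. apply Rmult_le_reg_r with lam; auto. rewrite Rmult_assoc, Rinv_l, Rmult_1_r by lra.
    replace (eps / 2 * lam) with (c * P + eps / 2) by (unfold lam; field; lra). lra. }
  assert (A2 : c * lam * (e N + f N) <= c * lam * (eps / (2 * (c * lam + 1)))).
  { apply Rmult_le_compat_l; [nra|lra]. }
  assert (A3 : c * lam * (eps / (2 * (c * lam + 1))) < eps / 2).
  { apply Rmult_lt_reg_r with (2 * (c * lam + 1)); [nra|]. field_simplify; try nra. }
  replace (c * (lam * (e N + f N) + P / lam)) with (c * lam * (e N + f N) + c * P / lam) by (field; lra).
  lra.
Qed.

Section Conv.
Variables (phi : fcoef) (s t : R).
Hypothesis (Hphi : real_L2_0 phi).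

Notation tr N := (trunc N phi).

Lemma phi0 : phi 0%Z = RtoC 0.
Proof. destruct Hphi as [_ [H _]]; exact H. Qed.
Lemma phir : realf phi.
Proof. destruct Hphi as [_ [_ H]]; exact H. Qed.

Lemma tr_le N k : Cmod (tr N k) <= Cmod (phi k).
Proof. unfold trunc. destruct (_ <=? _)%Z. lra. rewrite Cmod_0. apply Cmod_ge_0. Qed.

Lemma tr_diff_le N k : Cmod (Cminus (phi k) (tr N k)) <= Cmod (phi k).
Proof.
  unfold trunc. destruct (_ <=? _)%Z. replace (Cminus (phi k) (phi k)) with (RtoC 0) by ring. rewrite Cmod_0. apply Cmod_ge_0.
  replace (Cminus (phi k) (RtoC 0)) with (phi k) by ring. lra.
Qed.

Lemma tr_ev k : eventually (fun N => tr N k = phi k).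
Proof.
  exists (Z.to_nat (Z.abs k)). intros N HN. unfold trunc.
  destruct (Z.leb_spec (Z.abs k) (Z.of_nat N)); auto. lia.
Qed.

Lemma tr_supp N : suppC N (tr N).
Proof. intros k Hk. unfold trunc. destruct (Z.leb_spec (Z.abs k) (Z.of_nat N)); auto. lia. Qed.

Lemma tr_0 N : tr N 0%Z = RtoC 0.
Proof. unfold trunc. destruct (_ <=? _)%Z; auto. apply phi0. Qed.

Lemma tr_real N : realf (tr N).
Proof.
  intros k. unfold trunc. rewrite Z.abs_opp. destruct (_ <=? _)%Z. apply phir. Ctac.
Qed.

Lemma ev_lim (u : nat -> R) c : eventually (fun N => u N = c) -> is_lim_seq u c.
Proof. intros H. apply (is_lim_seq_ext_loc (fun _ => c)). destruct H as [N0 H]; exists N0; intros; symmetry; auto. apply is_lim_seq_const. Qed.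

Lemma termX_ev k k1 : eventually (fun N => termX t s (tr N) (tr N) k k1 = termX t s phi phi k k1).
Proof.
  destruct (tr_ev k1) as [N1 H1]. destruct (tr_ev (k - k1)%Z) as [N2 H2].
  exists (max N1 N2). intros N HN. unfold termX. rewrite H1, H2 by lia. auto.
Qed.

Lemma X_conv k : is_lim_seq (fun N => fst (Xts t s (tr N) (tr N) k)) (fst (Xts t s phi phi k)) /\
                 is_lim_seq (fun N => snd (Xts t s (tr N) (tr N) k)) (snd (Xts t s phi phi k)).
Proof.
  split; rewrite !Xts_eq; unfold sumZ; simpl.
  - apply (DCT (fun N k1 => fst (termX t s (tr N) (tr N) k k1)) _ (fun k1 => aa phi k1 * aa phi (k - k1)%Z)).
    + intros k1. apply ev_lim. destruct (termX_ev k k1) as [N0 H]. exists N0; intros; rewrite H; auto.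
    + intros N k1. eapply Rle_trans; [apply fst_le_Cmod|]. apply termX_bound. apply tr_le.
    + apply conv_summable; auto.
  - apply (DCT (fun N k1 => snd (termX t s (tr N) (tr N) k k1)) _ (fun k1 => aa phi k1 * aa phi (k - k1)%Z)).
    + intros k1. apply ev_lim. destruct (termX_ev k k1) as [N0 H]. exists N0; intros; rewrite H; auto.
    + intros N k1. eapply Rle_trans; [apply snd_le_Cmod|]. apply termX_bound. apply tr_le.
    + apply conv_summable; auto.
Qed.

Lemma inner_conv (F G : nat -> fcoef) (f g : fcoef) (B : Z -> R) :
  (forall k, is_lim_seq (fun N => fst (F N k)) (fst (f k)) /\ is_lim_seq (fun N => snd (F N k)) (snd (f k))) ->
  (forall k, is_lim_seq (fun N => fst (G N k)) (fst (g k)) /\ is_lim_seq (fun N => snd (G N k)) (snd (g k))) ->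
  (forall N k, Cmod (F N k) * Cmod (G N k) <= B k) -> summableZR B ->
  is_lim_seq (fun N => fst (l2inner (F N) (G N))) (fst (l2inner f g)) /\
  is_lim_seq (fun N => snd (l2inner (F N) (G N))) (snd (l2inner f g)).
Proof.
  intros HF HG HB HBs.
  assert (Hb : forall N k, Cmod (Cmult (F N k) (Cconj (G N k))) <= B k).
  { intros. rewrite Cmod_mult, Cmod_conj. auto. }
  split.
  - eapply is_lim_seq_ext; [intros; symmetry; apply fst_l2inner|]. rewrite fst_l2inner.
    apply (is_lim_seq_scal_l _ (2 * PI) (sumZR _)).
    apply (DCT (fun N k => fst (Cmult (F N k) (Cconj (G N k)))) _ B); auto.
    + intros k. simpl. destruct (HF k) as [A1 A2]. destruct (HG k) as [B1 B2].
      apply (is_lim_seq_minus' _ _ _ _ (is_lim_seq_mult' _ _ _ _ A1 B1)).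
      apply (is_lim_seq_mult' _ _ _ _ A2). apply (is_lim_seq_opp _ (snd (g k))) in B2. exact B2.
    + intros; eapply Rle_trans; [apply fst_le_Cmod|auto].
  - eapply is_lim_seq_ext; [intros; symmetry; apply snd_l2inner|]. rewrite snd_l2inner.
    apply (is_lim_seq_scal_l _ (2 * PI) (sumZR _)).
    apply (DCT (fun N k => snd (Cmult (F N k) (Cconj (G N k)))) _ B); auto.
    + intros k. simpl. destruct (HF k) as [A1 A2]. destruct (HG k) as [B1 B2].
      apply (is_lim_seq_plus' _ _ _ _); [|apply (is_lim_seq_mult' _ _ _ _ A2 B1)].
      apply (is_lim_seq_mult' _ _ _ _ A1). apply (is_lim_seq_opp _ (snd (g k))) in B2. exact B2.
    + intros; eapply Rle_trans; [apply snd_le_Cmod|auto].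
Qed.

Lemma tr_conv k : is_lim_seq (fun N => fst (tr N k)) (fst (phi k)) /\ is_lim_seq (fun N => snd (tr N k)) (snd (phi k)).
Proof.
  split; apply ev_lim; destruct (tr_ev k) as [N0 H]; exists N0; intros; rewrite H; auto.
Qed.

Lemma dd_sq_summable : summableZR (fun k => 4 * (AA phi * AA phi) * dd phi k).
Proof. apply summable_scal. apply dd_summable; auto. Qed.

Lemma dd_sq_le k : (2 * dd phi k) * (2 * dd phi k) <= 4 * (AA phi * AA phi) * dd phi k.
Proof.
  pose proof (dd_nonneg phi Hphi k). pose proof (dd_le phi Hphi k). nra.
Qed.

Lemma XX_conv : is_lim_seq (fun N => fst (l2inner (Xts t s (tr N) (tr N)) (Xts t s (tr N) (tr N)))) (fst (l2inner (Xts t s phi phi) (Xts t s phi phi))) /\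
  is_lim_seq (fun N => snd (l2inner (Xts t s (tr N) (tr N)) (Xts t s (tr N) (tr N)))) (snd (l2inner (Xts t s phi phi) (Xts t s phi phi))).
Proof.
  apply (inner_conv _ _ _ _ (fun k => 4 * (AA phi * AA phi) * dd phi k)); try apply X_conv; [|apply dd_sq_summable].
  intros N k. eapply Rle_trans; [|apply dd_sq_le].
  pose proof (Xts_Cmod_bound phi s t Hphi (tr N) k (tr_le N)). pose proof (Cmod_ge_0 (Xts t s (tr N) (tr N) k)).
  apply Rmult_le_compat; auto.
Qed.

Lemma PX_conv : is_lim_seq (fun N => fst (l2inner (tr N) (Xts t s (tr N) (tr N)))) (fst (l2inner phi (Xts t s phi phi))) /\
  is_lim_seq (fun N => snd (l2inner (tr N) (Xts t s (tr N) (tr N)))) (snd (l2inner phi (Xts t s phi phi))).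
Proof.
  destruct (summable_plus _ _ (n2_summable phi Hphi) dd_sq_summable) as [S _].
  apply (inner_conv (fun N => tr N) (fun N => Xts t s (tr N) (tr N)) phi (Xts t s phi phi)
    (fun k => n2 phi k + 4 * (AA phi * AA phi) * dd phi k) tr_conv X_conv); [|exact S].
  intros N k. unfold n2.
  pose proof (Xts_Cmod_bound phi s t Hphi (tr N) k (tr_le N)). pose proof (Cmod_ge_0 (Xts t s (tr N) (tr N) k)).
  pose proof (tr_le N k). pose proof (Cmod_ge_0 (tr N k)).
  eapply Rle_trans. { apply Rmult_le_compat; eauto. }
  eapply Rle_trans; [apply Rle_abs|]. eapply Rle_trans; [apply xy_le|].
  pose proof (dd_sq_le k). simpl in *. lra.
Qed.

End Conv.

Lemma Xdot_zero sg p W k : (forall j, p j = RtoC 0) -> Xdot sg p W k = RtoC 0.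
Proof.
  intros Hp. rewrite (Xdot_fin 0) by (intros j _; apply Hp).
  unfold bxC. rewrite zsC_zero. ring. intros j _. unfold termD. destruct (_ || _)%bool; auto. rewrite Hp. ring.
Qed.

Lemma Cconj_minus a b : Cconj (Cminus a b) = Cminus (Cconj a) (Cconj b).
Proof. Ctac. Qed.

Section YY.
Variables (phi : fcoef) (s t : R).
Hypothesis (Hphi : real_L2_0 phi).
Notation tr N := (trunc N phi).
Variable Y : fcoef.
Hypothesis HY : L2_converges (fun N => X2ts_trig t s (tr N) (tr N) (tr N)) Y.

Lemma tr0_zero j : tr 0 j = RtoC 0.
Proof. unfold trunc. destruct (Z.leb_spec (Z.abs j) (Z.of_nat 0)); auto. replace j with 0%Z by lia. apply phi0; auto. Qed.

Lemma X2_zero k : X2ts_trig t s (tr 0) (tr 0) (tr 0) k = RtoC 0.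
Proof.
  assert (Hz : forall a b, RInt (V := C_R_CompleteNormedModule) (fun _ => RtoC 0) a b = RtoC 0).
  { intros; apply CI_RInt; apply CI_zero. }
  unfold X2ts_trig.
  rewrite (RInt_ext (V := C_R_CompleteNormedModule) _ (fun _ => RtoC 0)). rewrite Hz. ring.
  intros x _. rewrite (RInt_ext (V := C_R_CompleteNormedModule) _ (fun _ => RtoC 0)). apply Hz.
  intros; apply Xdot_zero. apply tr0_zero.
Qed.

Lemma Y_l2 : in_l2 Y.
Proof.
  destruct HY as [H _]. specialize (H 0%nat). unfold in_l2 in *.
  replace (fun k => Cmod (Y k) ^ 2) with (fun k => Cmod (Cminus (X2ts_trig t s (tr 0) (tr 0) (tr 0) k) (Y k)) ^ 2); auto.
  apply functional_extensionality. intros k. rewrite X2_zero.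
  replace (Cminus (RtoC 0) (Y k)) with (Copp (Y k)) by ring. rewrite Cmod_opp. auto.
Qed.

Definition ee N := sumZR (fun k => Cmod (Cminus (phi k) (tr N k)) ^ 2).

Lemma E_summable N : summableZR (fun k => Cmod (Cminus (phi k) (tr N k)) ^ 2).
Proof.
  apply (summable_le _ (n2 phi)); [|apply n2_summable; auto].
  intros k. rewrite Rabs_right by (apply Rle_ge, pow2_ge_0). unfold n2.
  pose proof (tr_diff_le phi N k). pose proof (Cmod_ge_0 (Cminus (phi k) (tr N k))). 
  apply pow_incr. lra.
Qed.

Lemma ee_lim : is_lim_seq ee 0.
Proof.
  replace 0 with (sumZR (fun _ => 0)).
  2:{ rewrite (proj2 (sumZR_fin 0 (fun _ => 0) ltac:(intros ? ?; auto))). unfold bx; simpl. ring. }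
  apply (DCT _ _ (n2 phi)); [| |apply n2_summable; auto].
  - intros k. apply ev_lim. destruct (tr_ev phi k) as [N0 H]. exists N0. intros N HN. rewrite H by auto.
    replace (Cminus (phi k) (phi k)) with (RtoC 0) by ring. rewrite Cmod_0. ring.
  - intros N k. rewrite Rabs_right by (apply Rle_ge, pow2_ge_0). unfold n2.
    pose proof (tr_diff_le phi N k). pose proof (Cmod_ge_0 (Cminus (phi k) (tr N k))).
    apply pow_incr. lra.
Qed.

Lemma ee_nonneg N : 0 <= ee N.
Proof. apply sumZR_nonneg. intros; apply pow2_ge_0. apply E_summable. Qed.

Definition ff N := l2norm2 (fun k => Cminus (X2ts_trig t s (tr N) (tr N) (tr N) k) (Y k)).

Lemma ff_nonneg N : 0 <= ff N.
Proof. apply sumZR_nonneg. intros; apply pow2_ge_0. destruct HY as [H _]. exact (H N). Qed.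

Lemma ff_lim : is_lim_seq ff 0.
Proof. destruct HY as [_ H]. exact H. Qed.

Lemma YP_bound (prj : C -> R) :
  (forall z, Rabs (prj z) <= Cmod z) ->
  (forall z w, prj (Cminus z w) = prj z - prj w) ->
  (forall f g, prj (l2inner f g) = 2 * PI * sumZR (fun k => prj (Cmult (f k) (Cconj (g k))))) ->
  forall N lam, 0 < lam ->
  Rabs (prj (l2inner phi Y) - prj (l2inner (tr N) (X2ts_trig t s (tr N) (tr N) (tr N)))) <=
  PI * (lam * (ee N + ff N) + (l2norm2 Y + l2norm2 phi) / lam).
Proof.
  intros H1 H2 H3 N lam Hlam. rewrite !H3.
  set (u := X2ts_trig t s (tr N) (tr N) (tr N)).
  assert (HYs := Y_l2).
  assert (S1 : summableZR (fun k => prj (Cmult (phi k) (Cconj (Y k))))).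
  { destruct (summable_plus _ _ (n2_summable phi Hphi) HYs) as [S _].
    refine (proj1 (summable_le _ _ _ S)). intros k. eapply Rle_trans; [apply H1|]. rewrite Cmod_mult, Cmod_conj.
    unfold n2. eapply Rle_trans; [apply Rle_abs|apply xy_le]. }
  assert (P0 : prj (RtoC 0) = 0).
  { pose proof (H1 (RtoC 0)). rewrite Cmod_0 in H. apply Rabs_le_0 || idtac. 
    destruct (Req_dec (prj (RtoC 0)) 0); auto. pose proof (Rabs_pos_lt _ H0). lra. }
  assert (S2 : summableZR (fun k => prj (Cmult (tr N k) (Cconj (u k))))).
  { apply (sumZR_fin N). intros k Hk. rewrite (tr_supp phi N k Hk). rewrite Cmult_0_l'. auto. }
  destruct (summable_minus _ _ S1 S2) as [S3 E3].
  set (E := fun k => Cmod (Cminus (phi k) (tr N k)) ^ 2).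
  set (F := fun k => Cmod (Cminus (u k) (Y k)) ^ 2).
  assert (SE : summableZR E) by apply E_summable.
  assert (SF : summableZR F) by (destruct HY as [H _]; exact (H N)).
  set (h := fun k => (lam / 2 * E k + / (2 * lam) * (Cmod (Y k) ^ 2)) + (/ (2 * lam) * n2 phi k + lam / 2 * F k)).
  assert (Sh : summableZR h /\ sumZR h = lam / 2 * ee N + / (2 * lam) * l2norm2 Y + (/ (2 * lam) * l2norm2 phi + lam / 2 * ff N)).
  { destruct (summable_scal (lam / 2) E SE) as [a1 b1].
    destruct (summable_scal (/ (2 * lam)) _ HYs) as [a2 b2].
    destruct (summable_scal (/ (2 * lam)) _ (n2_summable phi Hphi)) as [a3 b3].
    destruct (summable_scal (lam / 2) F SF) as [a4 b4].
    destruct (summable_plus _ _ a1 a2) as [a5 b5].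
    destruct (summable_plus _ _ a3 a4) as [a6 b6].
    destruct (summable_plus _ _ a5 a6) as [a7 b7].
    split. exact a7. unfold h. rewrite b7, b5, b6, b1, b2, b3, b4. unfold ee, ff, l2norm2. auto. }
  destruct Sh as [Sh Eh].
  assert (Hb : forall k, Rabs (prj (Cmult (phi k) (Cconj (Y k))) - prj (Cmult (tr N k) (Cconj (u k)))) <= h k).
  { intros k. rewrite <- H2. eapply Rle_trans; [apply H1|].
    replace (Cminus (Cmult (phi k) (Cconj (Y k))) (Cmult (tr N k) (Cconj (u k))))
      with (Cplus (Cmult (Cminus (phi k) (tr N k)) (Cconj (Y k))) (Cmult (tr N k) (Cconj (Cminus (Y k) (u k))))).
    2:{ rewrite Cconj_minus. ring. }
    eapply Rle_trans; [apply Cmod_triangle|]. rewrite !Cmod_mult, !Cmod_conj.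
    assert (Cmod (Cminus (Y k) (u k)) = Cmod (Cminus (u k) (Y k))) as ->.
    { replace (Cminus (Y k) (u k)) with (Copp (Cminus (u k) (Y k))) by ring. apply Cmod_opp. }
    pose proof (amgm lam (Cmod (Cminus (phi k) (tr N k))) (Cmod (Y k)) Hlam).
    pose proof (amgm lam (Cmod (Cminus (u k) (Y k))) (Cmod (phi k)) Hlam).
    pose proof (tr_le phi N k). pose proof (Cmod_ge_0 (Cminus (u k) (Y k))).
    assert (Cmod (tr N k) * Cmod (Cminus (u k) (Y k)) <= Cmod (Cminus (u k) (Y k)) * Cmod (phi k)) by nra.
    unfold h, E, F, n2. unfold Rdiv in *.
    replace (/ (2 * lam)) with (/ lam * / 2) by (field; lra).
    lra. }
  rewrite <- Rmult_minus_distr_l, <- E3, Rabs_mult.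
  rewrite Rabs_right by (pose proof PI_RGT_0; lra).
  eapply Rle_trans. { apply Rmult_le_compat_l. pose proof PI_RGT_0; lra. apply (proj2 (summable_le _ _ Hb Sh)). }
  rewrite Eh. right. field. lra.
Qed.

Lemma PY_conv (prj : C -> R) :
  (forall z, Rabs (prj z) <= Cmod z) ->
  (forall z w, prj (Cminus z w) = prj z - prj w) ->
  (forall f g, prj (l2inner f g) = 2 * PI * sumZR (fun k => prj (Cmult (f k) (Cconj (g k))))) ->
  is_lim_seq (fun N => prj (l2inner (tr N) (X2ts_trig t s (tr N) (tr N) (tr N)))) (prj (l2inner phi Y)).
Proof.
  intros H1 H2 H3.
  apply (lam_conv _ _ ee ff (l2norm2 Y + l2norm2 phi) PI).
  - pose proof (sumZR_nonneg (fun k => Cmod (Y k) ^ 2) (fun k => pow2_ge_0 _) Y_l2).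
    pose proof (sumZR_nonneg (n2 phi) (fun k => pow2_ge_0 _) (n2_summable phi Hphi)).
    unfold l2norm2, n2 in *. lra.
  - pose proof PI_RGT_0; lra.
  - apply ee_lim. - apply ff_lim. - apply ee_nonneg. - apply ff_nonneg.
  - intros; apply YP_bound; auto.
Qed.

End YY.

Theorem lemma3 (phi : fcoef) (s t : R) (Hphi : real_L2_0 phi) :
  l2inner phi (Xts t s phi phi) = RtoC 0 /\
  (forall Y : fcoef,
     L2_converges
       (fun N => X2ts_trig t s (trunc N phi) (trunc N phi) (trunc N phi)) Y ->
     Cplus (Cmult (RtoC 2) (l2inner phi Y))
           (l2inner (Xts t s phi phi) (Xts t s phi phi)) = RtoC 0).
Proof.
  assert (P1 : forall N, l2inner (trunc N phi) (Xts t s (trunc N phi) (trunc N phi)) = RtoC 0).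
  { intros N. apply (part1_fin N); [apply tr_supp|apply tr_0|apply tr_real]; auto. }
  split.
  - destruct (PX_conv phi s t Hphi) as [A B].
    assert (E1 := lim_const_eq _ 0 _ (fun N => f_equal fst (P1 N)) A).
    assert (E2 := lim_const_eq _ 0 _ (fun N => f_equal snd (P1 N)) B).
    apply injective_projections; [rewrite E1|rewrite E2]; reflexivity.
  - intros Y HY.
    assert (F2 : forall N, Cplus (Cmult (RtoC 2) (l2inner (trunc N phi) (fun k => X2ts_trig t s (trunc N phi) (trunc N phi) (trunc N phi) k)))
         (l2inner (Xts t s (trunc N phi) (trunc N phi)) (Xts t s (trunc N phi) (trunc N phi))) = RtoC 0).
    { intros N. apply (fin2 N); [apply tr_supp|apply tr_0|apply tr_real]; auto. }
    destruct (XX_conv phi s t Hphi) as [A B].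
    assert (C1 := PY_conv phi s t Hphi Y HY fst fst_le_Cmod ltac:(intros; simpl; ring) fst_l2inner).
    assert (C2 := PY_conv phi s t Hphi Y HY snd snd_le_Cmod ltac:(intros; simpl; ring) snd_l2inner).
    assert (L1 := is_lim_seq_plus' _ _ _ _ (is_lim_seq_mult' _ _ _ _ (is_lim_seq_const 2) C1) A).
    assert (L2 := is_lim_seq_plus' _ _ _ _ (is_lim_seq_mult' _ _ _ _ (is_lim_seq_const 2) C2) B).
    assert (fc : forall a b : C, fst (Cplus (Cmult (RtoC 2) a) b) = 2 * fst a + fst b) by (intros; simpl; ring).
    assert (sc : forall a b : C, snd (Cplus (Cmult (RtoC 2) a) b) = 2 * snd a + snd b) by (intros; simpl; ring).
    assert (E1 := lim_const_eq _ 0 _ (fun N => eq_trans (eq_sym (fc _ _)) (f_equal fst (F2 N))) L1).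
    assert (E2 := lim_const_eq _ 0 _ (fun N => eq_trans (eq_sym (sc _ _)) (f_equal snd (F2 N))) L2).
    apply injective_projections; [rewrite fc; change (fst (RtoC 0)) with 0|rewrite sc; change (snd (RtoC 0)) with 0]; lra.
Qed.
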